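(* Let $q>1$, $p=\frac{q}{q-1}$, and assume Hypothesis (H$_q$). Then for all $x\in[a,b]$, $\lambda\in[0,1]$ and $\theta>0$, $$\big|S_f(mx,\lambda,\theta,ma,mb)\big|\le\frac{m^\theta A_4(\theta,\lambda,p)^{\frac1p}}{b-a}\Big\{(x-a)^{\theta+1}\Big(\frac{|f'(mx)|^q+\alpha m|f'(a)|^q}{\alpha+1}\Big)^{\frac1q}+(b-x)^{\theta+1}\Big(\frac{|f'(mx)|^q+\alpha m|f'(b)|^q}{\alpha+1}\Big)^{\frac1q}\Big\}.$$
   Context: Let $\Gamma$ denote Euler's Gamma function. Given $m\in(0,1]$, $a<b$, $x\in[a,b]$, $\lambda\in[0,1]$, $\theta>0$ and a function $f$ integrable on $[ma,mb]$, the Riemann–Liouville fractional integrals appearing below are $J^\theta_{(mx)^-}f(ma)=\frac{1}{\Gamma(\theta)}\int_{ma}^{mx}(s-ma)^{\theta-1}f(s)\,ds$ and $J^\theta_{(mx)^+}f(mb)=\frac{1}{\Gamma(\theta)}\int_{mx}^{mb}(mb-s)^{\theta-1}f(s)\,ds$ (each equal to $0$ if its interval of integration is degenerate), and $$S_f(mx,\lambda,\theta,ma,mb)=(1-\lambda)m^{\theta-1}\frac{(x-a)^\theta+(b-x)^\theta}{b-a}f(mx)+\lambda m^{\theta-1}\frac{(x-a)^\theta f(ma)+(b-x)^\theta f(mb)}{b-a}-\frac{\Gamma(\theta+1)}{m(b-a)}\Big[J^\theta_{(mx)^-}f(ma)+J^\theta_{(mx)^+}f(mb)\Big].$$ $(\alpha,m)$-convexity: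 for $(\alpha,m)\in[0,1]\times(0,1]$ and an interval $K\subseteq[0,\infty)$, a function $g:K\to\mathbb{R}$ is $(\alpha,m)$-convex on $K$ if $g(tX+m(1-t)Y)\le t^\alpha g(X)+m(1-t^\alpha)g(Y)$ for all $X,Y\in K$ and $t\in[0,1]$ with $tX+m(1-t)Y\in K$ (convention $0^0=1$). Hypothesis (H$_q$): $I\subseteq[0,\infty)$ is an interval, $f:I\to\mathbb{R}$ is differentiable on the interior $I^\circ$, $m\in(0,1]$, $\alpha\in[0,1]$, $a<b$ with $ma,b\in I^\circ$, $f'$ is Lebesgue integrable on $[ma,mb]$, and $|f'|^q$ is $(\alpha,m)$-convex on $[ma,b]$. $\beta(u,v)=\int_0^1t^{u-1}(1-t)^{v-1}dt$ ($u,v>0$) is the Beta function and ${}_2F_1(a',b';c';z)=\frac{1}{\beta(b',c'-b')}\int_0^1t^{b'-1}(1-t)^{c'-b'-1}(1-zt)^{-a'}dt$ ($c'>b'>0$, $|z|<1$) the hypergeometric function. For $\theta>0$, $p>1$: $A_4(\theta,\lambda,p)=\frac{1}{\theta p+1}$ if $\lambda=0$; $A_4(\theta,\lambda,p)=\frac{\lambda^{\frac{\theta p+1}{\theta}}}{\theta}\Big\{\beta\big(\tfrac1\theta,p+1\big)+\frac{(1-\lambda)^{p+1}}{p+1}\,{}_2F_1\big(\tfrac1\theta+p+1,\,p+1;\,p+2;\,1-\lambda\big)\Big\}$ if $0<\lambda<1$; $A_4(\theta,1,p)=\frac1\theta\beta\big(p+1,\tfrac1\theta\big)$. *)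

(* Defs.v *)
From Stdlib Require Import Reals Lra ClassicalEpsilon.
Open Scope R_scope.

(* Real power with the conventions needed here (base x >= 0):
   x^y = exp(y ln x) for x > 0, 0^0 = 1, 0^y = 0 for y <> 0. *)
Definition rpow (x y : R) : R :=
  if Rlt_dec 0 x then Rpower x y
  else if Req_EM_T y 0 then 1 else 0.

(* Total Riemann integral on a compact interval: the Riemann integral when
   g is Riemann integrable on [c,d] (independent of the proof), arbitrary otherwise. *)
Definition RInt (g : R -> R) (c d : R) : R :=
  epsilon (inhabits 0)
    (fun r => exists pr : Riemann_integrable g c d, RiemannInt pr = r).

(* Convergent (possibly improper) Riemann integral of g over the open interval (lo,hi):
   g is Riemann integrable on every [c,d] inside (lo,hi) and the integrals over [c,d]
   tend to L as c -> lo+ and d -> hi-. *)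
Definition imp_int_conv (g : R -> R) (lo hi L : R) : Prop :=
  (forall c d, lo < c -> c <= d -> d < hi -> inhabited (Riemann_integrable g c d)) /\
  (forall eps, 0 < eps -> exists delta, 0 < delta /\
     forall c d, lo < c < lo + delta -> hi - delta < d < hi -> c <= d ->
       Rabs (RInt g c d - L) < eps).

(* Value of the integral of g over (lo,hi); 0 if the interval is degenerate. *)
Definition Integral (g : R -> R) (lo hi : R) : R :=
  if Rlt_dec lo hi then epsilon (inhabits 0) (fun L => imp_int_conv g lo hi L) else 0.

(* Euler's Gamma function: Gamma(th) = int_0^oo t^(th-1) e^(-t) dt (improper). *)
Definition gamma_conv (th L : R) : Prop :=
  (forall c d, 0 < c -> c <= d ->
     inhabited (Riemann_integrable (fun t => rpow t (th - 1) * exp (- t)) c d)) /\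
  (forall eps, 0 < eps -> exists delta, 0 < delta /\ exists M,
     forall c d, 0 < c < delta -> M < d -> c <= d ->
       Rabs (RInt (fun t => rpow t (th - 1) * exp (- t)) c d - L) < eps).

Definition Gamma (th : R) : R := epsilon (inhabits 0) (fun L => gamma_conv th L).

Definition Beta (u v : R) : R :=
  Integral (fun t => rpow t (u - 1) * rpow (1 - t) (v - 1)) 0 1.

(* Gauss hypergeometric function 2F1(a',b';c';z) via Euler's integral *)
Definition hyp2F1 (a' b' c' z : R) : R :=
  / Beta b' (c' - b') *
  Integral (fun t => rpow t (b' - 1) * rpow (1 - t) (c' - b' - 1) * rpow (1 - z * t) (- a')) 0 1.

(* Riemann-Liouville fractional integrals (mx, ma, mb are the real arguments) *)
Definition RL_left (th : R) (f : R -> R) (mx ma : R) : R :=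
  / Gamma th * Integral (fun s => rpow (s - ma) (th - 1) * f s) ma mx.
Definition RL_right (th : R) (f : R -> R) (mx mb : R) : R :=
  / Gamma th * Integral (fun s => rpow (mb - s) (th - 1) * f s) mx mb.

Definition S_f (f : R -> R) (m x lam th a b : R) : R :=
  (1 - lam) * rpow m (th - 1) * (rpow (x - a) th + rpow (b - x) th) / (b - a) * f (m * x)
  + lam * rpow m (th - 1) * (rpow (x - a) th * f (m * a) + rpow (b - x) th * f (m * b)) / (b - a)
  - Gamma (th + 1) / (m * (b - a)) * (RL_left th f (m * x) (m * a) + RL_right th f (m * x) (m * b)).

Definition alpha_m_convex (alpha m : R) (K : R -> Prop) (g : R -> R) : Prop :=
  forall X Y t, K X -> K Y -> 0 <= t <= 1 -> K (t * X + m * (1 - t) * Y) ->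
    g (t * X + m * (1 - t) * Y) <= rpow t alpha * g X + m * (1 - rpow t alpha) * g Y.

Definition is_interval (I : R -> Prop) : Prop :=
  forall x y z, I x -> I z -> x <= y <= z -> I y.
(* Interior points: Stdlib's Rtopology.interior (a neighbourhood of x is contained in I). *)

Definition A4 (th lam p : R) : R :=
  if Req_EM_T lam 0 then / (th * p + 1)
  else if Req_EM_T lam 1 then / th * Beta (p + 1) (/ th)
  else rpow lam ((th * p + 1) / th) / th *
       (Beta (/ th) (p + 1) +
        rpow (1 - lam) (p + 1) / (p + 1) * hyp2F1 (/ th + p + 1) (p + 1) (p + 2) (1 - lam)).

(* Main.v *)
Require Import Defs.
From Stdlib Require Import Reals Lra ClassicalEpsilon FunctionalExtensionality PropExtensionality Classical.
From Coquelicot Require Import Coquelicot.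
Open Scope R_scope.

Lemma rpow_pos x y : 0 < x -> rpow x y = Rpower x y.
Proof. intros H; unfold rpow; destruct (Rlt_dec 0 x); [reflexivity|lra]. Qed.

Lemma rpow_le0 x y : x <= 0 -> y <> 0 -> rpow x y = 0.
Proof. intros H Hy; unfold rpow; destruct (Rlt_dec 0 x); [lra|].
destruct (Req_EM_T y 0); [contradiction|reflexivity]. Qed.

Lemma rpow_0 x : rpow x 0 = 1.
Proof. unfold rpow; destruct (Rlt_dec 0 x). apply Rpower_O; auto.
destruct (Req_EM_T 0 0); [reflexivity|lra]. Qed.

Lemma Rpower_pos x y : 0 < Rpower x y.
Proof. unfold Rpower; apply exp_pos. Qed.

Lemma rpow_ge0 x y : 0 <= rpow x y.
Proof. unfold rpow; destruct (Rlt_dec 0 x). left; apply Rpower_pos.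
destruct (Req_EM_T y 0); lra. Qed.

Lemma rpow_zero y : y <> 0 -> rpow 0 y = 0.
Proof. intros; apply rpow_le0; lra. Qed.

Lemma rpow_1 y : rpow 1 y = 1.
Proof. rewrite rpow_pos by lra. unfold Rpower; rewrite ln_1, Rmult_0_r; apply exp_0. Qed.

Lemma cpt_cont f x : continuity_pt f x -> continuous f x.
Proof. intros H; apply continuity_pt_filterlim; auto. Qed.

Lemma cont_cpt f x : continuous f x -> continuity_pt f x.
Proof. intros H; apply continuity_pt_filterlim; auto. Qed.

Lemma Rpower_cpt x y : 0 < x -> continuity_pt (fun t => Rpower t y) x.
Proof. intros H. apply derivable_continuous_pt. exists (y * Rpower x (y - 1)).
apply derivable_pt_lim_power; auto. Qed.

Lemma Rpower_lt1 x y : 0 < x -> 0 < y -> Rpower x y < Rpower 1 y -> x < 1.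
Proof. intros. destruct (Rlt_or_le x 1); auto.
assert (Rpower 1 y <= Rpower x y). destruct H2. left; apply Rlt_Rpower_l; lra. subst; lra. lra. Qed.

Lemma rpow_cpt x r : 0 < r -> continuity_pt (fun t => rpow t r) x.
Proof.
intros Hr. destruct (Rlt_or_le 0 x) as [Hx|Hx].
- apply continuity_pt_locally_ext with (f := fun t => Rpower t r) (a := x).
  auto. intros y Hy. unfold Rdist in Hy. rewrite rpow_pos; auto.
  apply Rabs_def2 in Hy; lra. apply Rpower_cpt; auto.
- destruct Hx as [Hx|Hx].
  + apply continuity_pt_locally_ext with (f := fun t => 0) (a := - x).
    lra. intros y Hy. unfold Rdist in Hy. apply Rabs_def2 in Hy.
    rewrite rpow_le0; lra. apply continuity_pt_const. intros a b; auto.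
  + subst x. intros eps Heps. exists (Rpower eps (/ r)). split.
    apply Rpower_pos. intros y [_ Hy]. unfold R_dist, Rdist in *.
    simpl in *. unfold Rdist, R_dist in *. rewrite rpow_zero by lra. unfold Rminus in *; rewrite ?Ropp_0, ?Rplus_0_r in *.
    destruct (Rlt_or_le 0 y).
    * rewrite rpow_pos; auto. rewrite Rabs_pos_eq by (left; apply Rpower_pos).
      rewrite Rabs_pos_eq in Hy by lra.
      assert (Rpower y r < Rpower (Rpower eps (/ r)) r).
      apply Rlt_Rpower_l; auto. rewrite Rpower_mult in H0.
      rewrite Rinv_l in H0 by lra. rewrite Rpower_1 in H0; auto.
    * rewrite rpow_le0; auto; try lra. rewrite Rabs_R0; auto.
Qed.

Lemma rpow_cpt_pos x r : 0 < x -> continuity_pt (fun t => rpow t r) x.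
Proof. intros Hx.
  apply continuity_pt_locally_ext with (f := fun t => Rpower t r) (a := x).
  auto. intros y Hy. unfold Rdist in Hy. rewrite rpow_pos; auto.
  apply Rabs_def2 in Hy; lra. apply Rpower_cpt; auto. Qed.

Lemma rpow_cpt_ge0 x r : 0 <= r -> continuity_pt (fun t => rpow t r) x.
Proof. intros [H|H]. apply rpow_cpt; auto. subst.
apply continuity_pt_ext with (f := fun _ => 1). intros; rewrite rpow_0; auto.
apply continuity_pt_const; intros a b; auto. Qed.
Lemma cpt_eps f x : continuity_pt f x ->
  forall eps, 0 < eps -> exists d, 0 < d /\ forall y, Rabs (y - x) < d -> Rabs (f y - f x) < eps.
Proof.
intros H eps He. destruct (H eps He) as [d [Hd Hy]]. exists d; split; auto.
intros y Hyx. destruct (Req_dec y x). subst; rewrite Rminus_eq_0, Rabs_R0; auto.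
apply Hy. unfold D_x, no_cond, R_dist; simpl; unfold R_dist. repeat split; auto.
Qed.

Lemma DRInt_eq g c d : Riemann_integrable g c d -> Defs.RInt g c d = RInt g c d.
Proof.
intros pr. unfold Defs.RInt.
destruct (epsilon_spec (inhabits 0) (fun r => exists pr : Riemann_integrable g c d, RiemannInt pr = r)
  (ex_intro _ (RiemannInt pr) (ex_intro _ pr eq_refl))) as [pr' H].
rewrite <- H. symmetry; apply RInt_Reals.
Qed.

Lemma imp_unique g lo hi L1 L2 : lo < hi -> imp_int_conv g lo hi L1 -> imp_int_conv g lo hi L2 -> L1 = L2.
Proof.
intros Hlh [_ H1] [_ H2].
destruct (Req_dec L1 L2) as [|Hne]; auto. exfalso.
assert (He : 0 < Rabs (L1 - L2) / 2). apply Rdiv_lt_0_compat; [apply Rabs_pos_lt; lra|lra].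
destruct (H1 _ He) as [d1 [Hd1 K1]]. destruct (H2 _ He) as [d2 [Hd2 K2]].
set (d := Rmin (Rmin d1 d2) (hi - lo)).
assert (Hd : 0 < d). unfold d; repeat apply Rmin_pos; lra.
assert (d <= d1 /\ d <= d2 /\ d <= hi - lo).
unfold d; repeat split; [apply Rle_trans with (Rmin d1 d2); [apply Rmin_l|apply Rmin_l]|
 apply Rle_trans with (Rmin d1 d2); [apply Rmin_l|apply Rmin_r]|apply Rmin_r].
specialize (K1 (lo + d/2) (hi - d/2)). specialize (K2 (lo + d/2) (hi - d/2)).
assert (A1 : Rabs (Defs.RInt g (lo + d/2) (hi - d/2) - L1) < Rabs (L1 - L2) / 2) by (apply K1; lra).
assert (A2 : Rabs (Defs.RInt g (lo + d/2) (hi - d/2) - L2) < Rabs (L1 - L2) / 2) by (apply K2; lra).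
set (X := Defs.RInt g (lo + d/2) (hi - d/2)) in *.
assert (Rabs (L1 - L2) <= Rabs (X - L1) + Rabs (X - L2)).
replace (L1 - L2) with (-(X - L1) + (X - L2)) by ring.
eapply Rle_trans. apply Rabs_triang. rewrite Rabs_Ropp; lra. lra.
Qed.

Lemma Integral_eq g lo hi L : lo < hi -> imp_int_conv g lo hi L -> Integral g lo hi = L.
Proof.
intros Hlh H. unfold Integral. destruct (Rlt_dec lo hi); [|lra].
apply imp_unique with g lo hi; auto.
apply (epsilon_spec (inhabits 0) (fun L => imp_int_conv g lo hi L)). exists L; auto.
Qed.

Lemma Integral_deg g lo : Integral g lo lo = 0.
Proof. unfold Integral. destruct (Rlt_dec lo lo); [lra|auto]. Qed.

Lemma ex_RInt_cont (g : R -> R) a b : (forall z, Rmin a b <= z <= Rmax a b -> continuous g z) -> ex_RInt g a b.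
Proof. apply (@ex_RInt_continuous R_CompleteNormedModule). Qed.

Lemma RInt_uniq (g : R -> R) a b (l : R) : is_RInt g a b l -> RInt g a b = l.
Proof. apply (@is_RInt_unique R_CompleteNormedModule). Qed.
Lemma RInt_corr (g : R -> R) a b : ex_RInt g a b -> is_RInt g a b (RInt g a b).
Proof. apply (@RInt_correct R_CompleteNormedModule). Qed.

Lemma Integral_antideriv g Psi lo hi : lo < hi ->
  (forall y, lo < y < hi -> derivable_pt_lim Psi y (g y) /\ continuity_pt g y) ->
  continuity_pt Psi lo -> continuity_pt Psi hi ->
  Integral g lo hi = Psi hi - Psi lo.
Proof.
intros Hlh Hd Clo Chi.
assert (Hex : forall c d, lo < c -> c <= d -> d < hi -> ex_RInt g c d).
{ intros c d H1 H2 H3. apply ex_RInt_cont. intros z Hz.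
  rewrite Rmin_left in Hz by lra. rewrite Rmax_right in Hz by lra.
  apply cpt_cont. apply Hd; lra. }
assert (Hv : forall c d, lo < c -> c <= d -> d < hi -> Defs.RInt g c d = Psi d - Psi c).
{ intros c d H1 H2 H3. rewrite DRInt_eq by (apply ex_RInt_Reals_0; auto).
  apply RInt_uniq.
  assert (HH := is_RInt_derive Psi g c d).
  apply HH.
  intros x Hx. rewrite Rmin_left in Hx by lra. rewrite Rmax_right in Hx by lra.
  apply is_derive_Reals. apply Hd; lra.
  intros x Hx. rewrite Rmin_left in Hx by lra. rewrite Rmax_right in Hx by lra.
  apply cpt_cont. apply Hd; lra. }
apply Integral_eq; auto. split.
- intros c d H1 H2 H3. constructor. apply ex_RInt_Reals_0; auto.
- intros eps He.
  destruct (cpt_eps _ _ Clo (eps/2)) as [d1 [Hd1 K1]]; [lra|].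
  destruct (cpt_eps _ _ Chi (eps/2)) as [d2 [Hd2 K2]]; [lra|].
  exists (Rmin d1 d2). split. apply Rmin_pos; auto.
  intros c d Hc Hd' Hcd. rewrite Hv by lra.
  assert (Rmin d1 d2 <= d1) by apply Rmin_l. assert (Rmin d1 d2 <= d2) by apply Rmin_r.
  assert (A1: Rabs (Psi c - Psi lo) < eps/2) by (apply K1; rewrite Rabs_pos_eq; lra).
  assert (A2: Rabs (Psi d - Psi hi) < eps/2) by (apply K2; rewrite Rabs_left; lra).
  replace (Psi d - Psi c - (Psi hi - Psi lo)) with ((Psi d - Psi hi) - (Psi c - Psi lo)) by ring.
  eapply Rle_lt_trans. apply Rabs_triang. rewrite Rabs_Ropp. lra.
Qed.

Lemma is_RInt_refl (g : R -> R) a b (l : R) : is_RInt g (-b) (-a) l -> is_RInt (fun s => g (- s)) a b l.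
Proof.
intros H. apply is_RInt_swap in H.
assert (H2 := is_RInt_comp_lin g (-1) 0 a b (opp l)).
replace (-1 * a + 0) with (-a) in H2 by ring. replace (-1 * b + 0) with (-b) in H2 by ring.
apply H2 in H. apply is_RInt_opp in H.
rewrite opp_opp in H. eapply is_RInt_ext; [|exact H].
intros x _. unfold scal, opp; simpl. unfold mult; simpl. replace (-1*x+0) with (-x) by ring. change (- (-1 * g (-x)) = g (-x)). ring.
Qed.

Lemma ex_RInt_refl (g : R -> R) a b : ex_RInt g (-b) (-a) -> ex_RInt (fun s => g (- s)) a b.
Proof. intros [l H]. exists l. apply is_RInt_refl; auto. Qed.

Lemma conv_refl g g2 lo hi L : lo < hi -> (forall s, g2 s = g (- s)) ->
  imp_int_conv g lo hi L -> imp_int_conv g2 (-hi) (-lo) L.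
Proof.
intros Hlh Hg [H1 H2].
assert (E : g2 = fun s => g (- s)) by (apply functional_extensionality; auto). subst g2.
split.
- intros c d Hc Hcd Hd. destruct (H1 (-d) (-c)) as [pr]; try lra.
  constructor. apply ex_RInt_Reals_0. apply ex_RInt_refl. apply ex_RInt_Reals_1; auto.
- intros eps He. destruct (H2 eps He) as [del [Hdel K]]. exists del; split; auto.
  intros c d Hc Hd Hcd. destruct (H1 (-d) (-c)) as [pr]; try lra.
  assert (Hx : ex_RInt g (-d) (-c)) by (apply ex_RInt_Reals_1; auto).
  rewrite DRInt_eq. 2:{ apply ex_RInt_Reals_0, ex_RInt_refl; auto. }
  replace (RInt (fun s => g (- s)) c d) with (Defs.RInt g (-d) (-c)).
  apply K; lra.
  rewrite DRInt_eq by auto. symmetry. apply RInt_uniq. apply is_RInt_refl.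
  apply RInt_corr; auto.
Qed.

Lemma Integral_refl g g2 lo hi : lo < hi -> (forall s, g2 s = g (- s)) ->
  Integral g lo hi = Integral g2 (-hi) (-lo).
Proof.
intros Hlh Hg. unfold Integral.
destruct (Rlt_dec lo hi); [|lra]. destruct (Rlt_dec (-hi) (-lo)); [|lra].
f_equal. apply functional_extensionality. intros L.
apply propositional_extensionality. split.
- apply conv_refl; auto.
- intros H. assert (H' := conv_refl g2 g (-hi) (-lo) L ltac:(lra)).
  rewrite !Ropp_involutive in H'. apply H'; auto.
  intros s. rewrite Hg, Ropp_involutive; auto.
Qed.
Lemma deriv_RInt_glob (h : R -> R) a : (forall x, continuity_pt h x) ->
  forall y, derivable_pt_lim (fun z => RInt h a z) y (h y).
Proof.
intros Hc y. apply is_derive_Reals.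
apply (is_derive_RInt h (fun z => RInt h a z) a y).
- apply filter_forall. intros b0. apply RInt_corr. apply ex_RInt_cont.
  intros; apply cpt_cont; auto.
- apply cpt_cont; auto.
Qed.

Lemma deriv_RInt_loc (h : R -> R) a lo hi : (forall x, lo < x < hi -> continuity_pt h x) ->
  lo < a < hi -> forall y, lo < y < hi -> derivable_pt_lim (fun z => RInt h a z) y (h y).
Proof.
intros Hc Ha y Hy. apply is_derive_Reals.
apply (is_derive_RInt h (fun z => RInt h a z) a y).
- assert (He : 0 < Rmin (y - lo) (hi - y)) by (apply Rmin_pos; lra).
  exists (mkposreal _ He). intros b0 Hb0.
  assert (Hb : Rabs (b0 - y) < Rmin (y - lo) (hi - y)) by (apply Hb0).
  apply Rabs_def2 in Hb. assert (Rmin (y - lo) (hi - y) <= y - lo) by apply Rmin_l.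
  assert (Rmin (y - lo) (hi - y) <= hi - y) by apply Rmin_r.
  apply RInt_corr. apply ex_RInt_cont.
  intros z Hz. apply cpt_cont. apply Hc.
  split. apply Rlt_le_trans with (Rmin a b0); [|apply Hz]. apply Rmin_case; lra.
  apply Rle_lt_trans with (Rmax a b0); [apply Hz|]. apply Rmax_case; lra.
- apply cpt_cont; auto.
Qed.

Lemma exp_conv_bound X M : exp M * (1 + (X - M)) <= exp X.
Proof.
replace (exp X) with (exp M * exp (X - M)). apply Rmult_le_compat_l.
left; apply exp_pos. apply exp_ineq1_le. rewrite <- exp_plus. f_equal; ring.
Qed.

Lemma young a b q : 0 <= a -> 0 <= b -> 1 < q ->
  a * b <= rpow a (q / (q - 1)) / (q / (q - 1)) + rpow b q / q.
Proof.
intros Ha Hb Hq. set (p := q / (q - 1)).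
assert (Hp : 0 < p) by (unfold p; apply Rdiv_lt_0_compat; lra).
assert (Hpq : / p + / q = 1) by (unfold p; field; lra).
assert (R1 : 0 <= rpow a p / p) by (apply Rdiv_le_0_compat; [apply rpow_ge0|lra]).
assert (R2 : 0 <= rpow b q / q) by (apply Rdiv_le_0_compat; [apply rpow_ge0|lra]).
destruct Ha as [Ha|Ha]; [|subst; lra].
destruct Hb as [Hb|Hb]; [|subst; lra].
rewrite !rpow_pos by auto. unfold Rpower.
set (M := ln a + ln b).
assert (E : a * b = exp M) by (unfold M; rewrite exp_plus, !exp_ln; auto).
rewrite E.
assert (K1 := exp_conv_bound (p * ln a) M). assert (K2 := exp_conv_bound (q * ln b) M).
assert (exp M = / p * (exp M * (1 + (p * ln a - M))) + / q * (exp M * (1 + (q * ln b - M)))).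
{ replace (/ p * (exp M * (1 + (p * ln a - M))) + / q * (exp M * (1 + (q * ln b - M))))
   with (exp M * ((/ p + / q) * (1 - M) + ln a + ln b)) by (field; lra).
  rewrite Hpq. unfold M. ring. }
rewrite H. unfold Rdiv. rewrite (Rmult_comm (exp (p * ln a))), (Rmult_comm (exp (q * ln b))).
apply Rplus_le_compat; apply Rmult_le_compat_l; auto; left; apply Rinv_0_lt_compat; lra.
Qed.

Lemma young_eps a b q e : 0 <= a -> 0 <= b -> 1 < q -> 0 < e ->
  a * b <= Rpower e (q / (q - 1)) * rpow a (q / (q - 1)) / (q / (q - 1)) + Rpower e (- q) * rpow b q / q.
Proof.
intros Ha Hb Hq He. set (p := q / (q - 1)).
assert (Hp : 0 < p) by (unfold p; apply Rdiv_lt_0_compat; lra).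
replace (a * b) with ((e * a) * (b / e)) by (field; lra).
eapply Rle_trans. apply (young (e*a) (b/e) q). apply Rmult_le_pos; lra. apply Rdiv_le_0_compat; lra. lra.
fold p. apply Rplus_le_compat; right.
- destruct Ha as [Ha|Ha]. rewrite !rpow_pos by (try apply Rmult_lt_0_compat; auto).
  rewrite Rpower_mult_distr; auto. subst a. rewrite Rmult_0_r, rpow_zero by lra. field; lra.
- destruct Hb as [Hb|Hb]. rewrite !rpow_pos by (try apply Rdiv_lt_0_compat; auto).
  unfold Rdiv. rewrite <- Rpower_mult_distr; auto; [|apply Rinv_0_lt_compat; auto].
  unfold Rpower at 2 3. rewrite ln_Rinv by auto. replace (q * - ln e) with (- q * ln e) by ring. field; lra.
  subst b. unfold Rdiv. rewrite Rmult_0_l, rpow_zero by lra. field; lra.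
Qed.
Lemma is_derive_val (f : R -> R) x (l l' : R) : is_derive f x l -> l = l' -> is_derive f x l'.
Proof. intros H E; subst; auto. Qed.

Lemma is_derive_rpow x r : 0 < x -> is_derive (fun t => rpow t r) x (r * Rpower x (r - 1)).
Proof.
intros Hx. apply is_derive_ext_loc with (fun t => Rpower t r).
- exists (mkposreal _ Hx). intros y Hy. assert (Hb : Rabs (y - x) < x) by apply Hy.
  apply Rabs_def2 in Hb. rewrite rpow_pos; auto; lra.
- apply is_derive_Reals. apply derivable_pt_lim_power; auto.
Qed.

Lemma Rpower_div a b r : 0 < a -> 0 < b -> Rpower (a / b) r = Rpower a r / Rpower b r.
Proof. intros. unfold Rpower, Rdiv. rewrite ln_mult, ln_Rinv; auto; [|apply Rinv_0_lt_compat; auto].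
rewrite <- exp_Ropp, <- exp_plus. f_equal; ring. Qed.

Lemma Rpower_m1 b r : 0 < b -> Rpower b r = Rpower b (r - 1) * b.
Proof. intros. rewrite <- (Rpower_1 b) at 3 by auto. rewrite <- Rpower_plus. f_equal; ring. Qed.

Definition ghat (phi : R -> R) (u th : R) : R -> R :=
  fun s => if Rlt_dec u s then rpow (s - u) (th - 1) * (phi s - phi u) else 0.

Lemma ghat_cont_u phi phi' u th : 0 < th -> derivable_pt_lim phi u phi' ->
  continuity_pt (ghat phi u th) u.
Proof.
intros Hth Hd eps He.
set (C := Rabs phi' + 1).
assert (HC : 0 < C) by (unfold C; assert (0 <= Rabs phi') by apply Rabs_pos; lra).
destruct (Hd 1 ltac:(lra)) as [d1 Hd1].
assert (HK : 0 < eps / C) by (apply Rdiv_lt_0_compat; auto).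
exists (Rmin d1 (Rpower (eps / C) (/ th))). split.
apply Rmin_pos. apply cond_pos. apply Rpower_pos.
intros s [_ Hs]. unfold R_dist, Rdist in *. simpl in *. unfold R_dist, Rdist in *.
unfold ghat. destruct (Rlt_dec u u); [lra|]. rewrite Rminus_0_r.
destruct (Rlt_dec u s) as [Hus|Hus].
2: { rewrite Rabs_R0; auto. }
assert (Hm1 : Rmin d1 (Rpower (eps / C) (/ th)) <= d1) by apply Rmin_l.
assert (Hm2 : Rmin d1 (Rpower (eps / C) (/ th)) <= Rpower (eps / C) (/ th)) by apply Rmin_r.
rewrite Rabs_pos_eq in Hs by lra.
specialize (Hd1 (s - u) ltac:(lra) ltac:(rewrite Rabs_pos_eq; lra)).
replace (u + (s - u)) with s in Hd1 by ring.
assert (B1 : Rabs (phi s - phi u) <= C * (s - u)).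
{ assert (Rabs ((phi s - phi u) / (s - u)) < C).
  { replace ((phi s - phi u) / (s - u)) with (((phi s - phi u) / (s - u) - phi') + phi') by ring.
    eapply Rle_lt_trans. apply Rabs_triang. unfold C; lra. }
  unfold Rdiv in H. rewrite Rabs_mult, Rabs_inv, (Rabs_pos_eq (s - u)) in H by lra.
  apply Rmult_lt_compat_r with (r := s - u) in H; [|lra].
  rewrite Rmult_assoc, Rinv_l, Rmult_1_r in H by lra. lra. }
rewrite rpow_pos by lra. rewrite Rabs_mult, Rabs_pos_eq by (left; apply Rpower_pos).
apply Rle_lt_trans with (Rpower (s - u) (th - 1) * (C * (s - u))).
apply Rmult_le_compat_l; auto. left; apply Rpower_pos.
replace (Rpower (s - u) (th - 1) * (C * (s - u))) with (C * Rpower (s - u) th)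
 by (rewrite (Rpower_m1 (s - u) th) by lra; ring).
assert (Rpower (s - u) th < Rpower (Rpower (eps / C) (/ th)) th).
apply Rlt_Rpower_l; auto; lra.
rewrite Rpower_mult, Rinv_l, Rpower_1 in H by lra.
apply Rmult_lt_compat_l with (r := C) in H; auto.
replace (C * (eps / C)) with eps in H by (field; lra). lra.
Qed.

Lemma ghat_cpt phi phi' u th lo hi : 0 < th -> lo < u ->
  (forall s, lo < s < hi -> derivable_pt_lim phi s (phi' s)) ->
  forall s, lo < s < hi -> continuity_pt (ghat phi u th) s.
Proof.
intros Hth Hlo Hd s Hs.
destruct (Rlt_or_le u s) as [H|[H|H]].
- apply continuity_pt_locally_ext with (f := fun t => rpow (t - u) (th - 1) * (phi t - phi u)) (a := s - u).
  lra. intros y Hy. unfold Rdist in Hy. apply Rabs_def2 in Hy. unfold ghat.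
  destruct (Rlt_dec u y); [auto|lra].
  apply continuity_pt_mult.
  + apply (continuity_pt_comp (fun t => t - u) (fun t => rpow t (th - 1))).
    apply continuity_pt_minus. apply continuity_pt_id. apply continuity_pt_const; intros a b; auto.
    apply rpow_cpt_pos. lra.
  + apply continuity_pt_minus. apply derivable_continuous_pt. exists (phi' s). apply Hd; auto.
    apply continuity_pt_const; intros a b; auto.
- apply continuity_pt_locally_ext with (f := fun t => 0) (a := u - s).
  lra. intros y Hy. unfold Rdist in Hy. apply Rabs_def2 in Hy. unfold ghat.
  destruct (Rlt_dec u y); [lra|auto].
  apply continuity_pt_const; intros a b; auto.
- rewrite H. apply ghat_cont_u with (phi' u); auto. apply Hd; lra.
Qed.
Lemma D_plus (f g : R -> R) x df dg : is_derive f x df -> is_derive g x dg ->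
  is_derive (fun t => f t + g t) x (df + dg).
Proof. intros; apply (@is_derive_plus R_AbsRing R_NormedModule); auto. Qed.
Lemma D_minus (f g : R -> R) x df dg : is_derive f x df -> is_derive g x dg ->
  is_derive (fun t => f t - g t) x (df - dg).
Proof. intros; apply (@is_derive_minus R_AbsRing R_NormedModule); auto. Qed.
Lemma D_mult (f g : R -> R) x df dg : is_derive f x df -> is_derive g x dg ->
  is_derive (fun t => f t * g t) x (df * g x + f x * dg).
Proof. intros; apply (@is_derive_mult R_AbsRing); auto. intros; apply Rmult_comm. Qed.
Lemma D_comp (f g : R -> R) x df dg : is_derive f (g x) df -> is_derive g x dg ->
  is_derive (fun t => f (g t)) x (df * dg).
Proof. intros. rewrite Rmult_comm. apply (@is_derive_comp R_AbsRing R_NormedModule); auto. Qed.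
Lemma D_const (c : R) x : is_derive (fun _ => c) x 0.
Proof. apply (@is_derive_const R_AbsRing R_NormedModule). Qed.
Lemma D_id x : is_derive (fun t : R => t) x 1.
Proof. apply (@is_derive_id R_AbsRing). Qed.
Lemma D_inv (f : R -> R) x df : is_derive f x df -> f x <> 0 -> is_derive (fun t => / f t) x (- df / (f x)^2).
Proof. intros; apply is_derive_inv; auto. Qed.
Lemma D_exp (f : R -> R) x df : is_derive f x df -> is_derive (fun t => exp (f t)) x (exp (f x) * df).
Proof. intros. apply (D_comp exp f); auto. apply is_derive_Reals, derivable_pt_lim_exp. Qed.
Lemma D_rpow (f : R -> R) x df r : is_derive f x df -> 0 < f x ->
  is_derive (fun t => rpow (f t) r) x (r * Rpower (f x) (r - 1) * df).
Proof. intros. apply (D_comp (fun t => rpow t r) f); auto. exact (is_derive_rpow (f x) r H0). Qed.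
Lemma D_Rpower (f : R -> R) x df r : is_derive f x df -> 0 < f x ->
  is_derive (fun t => Rpower (f t) r) x (r * Rpower (f x) (r - 1) * df).
Proof. intros. apply (D_comp (fun t => Rpower t r) f); auto. apply is_derive_Reals. exact (derivable_pt_lim_power (f x) r H0). Qed.
Lemma D_RInt (h : R -> R) a x : (forall y, continuity_pt h y) -> is_derive (fun t => RInt h a t) x (h x).
Proof. intros. apply is_derive_Reals. apply deriv_RInt_glob; auto. Qed.

Lemma ex_RInt_glob (h : R -> R) a b : (forall y, continuity_pt h y) -> ex_RInt h a b.
Proof. intros. apply ex_RInt_cont. intros; apply cpt_cont; auto. Qed.

Lemma RInt_ge0 (h : R -> R) a b : a <= b -> ex_RInt h a b -> (forall x, a < x < b -> 0 <= h x) -> 0 <= RInt h a b.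
Proof.
intros Hab Hex Hp. replace 0 with (RInt (fun _ => 0) a b).
apply RInt_le; auto. apply ex_RInt_const.
rewrite RInt_const. unfold scal; simpl; unfold mult; simpl; ring.
Qed.

Lemma RInt_Chasles_R (h : R -> R) a b c : ex_RInt h a b -> ex_RInt h b c ->
  RInt h a b + RInt h b c = RInt h a c.
Proof. intros. apply (@RInt_Chasles R_CompleteNormedModule); auto. Qed.

Lemma RInt_lin2 (f g : R -> R) a b k1 k2 : ex_RInt f a b -> ex_RInt g a b ->
  RInt (fun s => k1 * f s + k2 * g s) a b = k1 * RInt f a b + k2 * RInt g a b.
Proof.
intros Hf Hg.
assert (E := @RInt_plus R_CompleteNormedModule (fun s => k1 * f s) (fun s => k2 * g s) a b).
transitivity (plus (RInt (fun s => k1 * f s) a b) (RInt (fun s => k2 * g s) a b)).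
apply E. apply (@ex_RInt_scal R_CompleteNormedModule); auto. apply (@ex_RInt_scal R_CompleteNormedModule); auto.
unfold plus; simpl.
assert (E1 := @RInt_scal R_CompleteNormedModule f a b k1 Hf).
assert (E2 := @RInt_scal R_CompleteNormedModule g a b k2 Hg).
unfold scal in E1, E2; simpl in E1, E2; unfold mult in E1, E2; simpl in E1, E2.
rewrite E1, E2; auto.
Qed.

Lemma RInt_scal_R (f : R -> R) a b k : ex_RInt f a b -> RInt (fun s => k * f s) a b = k * RInt f a b.
Proof. intros Hf. assert (E1 := @RInt_scal R_CompleteNormedModule f a b k Hf).
unfold scal in E1; simpl in E1; unfold mult in E1; simpl in E1. exact E1. Qed.

Lemma cpt_of_derive (f : R -> R) x l : is_derive f x l -> continuity_pt f x.
Proof. intros H. apply derivable_continuous_pt. exists l. apply is_derive_Reals; auto. Qed.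

Lemma RInt_point_R (h : R -> R) a : RInt h a a = 0.
Proof. apply (@RInt_point R_CompleteNormedModule). Qed.
Lemma cpt_shift_rpow u r x : 0 < r -> continuity_pt (fun s => rpow (s - u) r) x.
Proof. intros. apply (continuity_pt_comp (fun s => s - u) (fun t => rpow t r)).
apply continuity_pt_minus. apply continuity_pt_id. apply continuity_pt_const; intros a b; auto.
apply rpow_cpt; auto. Qed.

Lemma D_shift u y : is_derive (fun t => t - u) y 1.
Proof. eapply is_derive_val. apply D_minus. apply D_id. apply D_const. ring. Qed.

Lemma D_lin a b y : is_derive (fun t => (t - a) / b) y (/ b).
Proof. apply (is_derive_ext (fun t => / b * (t - a))).
intros t; unfold Rdiv; apply Rmult_comm. eapply is_derive_val. apply is_derive_scal. apply D_shift. ring. Qed.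

Lemma cst_cpt (c : R) x : continuity_pt (fun _ => c) x.
Proof. apply continuity_pt_const; intros a b; auto. Qed.

Lemma Rabs_le_inv' x y : Rabs x <= y -> -y <= x <= y.
Proof. intros H. assert (H1 := Rle_abs x). assert (H2 := Rle_abs (-x)). rewrite Rabs_Ropp in H2. lra. Qed.

Lemma RInt_ext_R (f g : R -> R) a b : (forall x, Rmin a b < x < Rmax a b -> f x = g x) -> RInt f a b = RInt g a b.
Proof. apply (@RInt_ext R_CompleteNormedModule). Qed.

Lemma key_left u v th lam q e (F F' G : R -> R) del :
  u < v -> 0 < th -> 0 <= lam <= 1 -> 1 < q -> 0 < e -> 0 < del ->
  (forall s, u - del < s < v + del -> derivable_pt_lim F s (F' s)) ->
  (forall s, u <= s <= v -> rpow (Rabs (F' s)) q <= G s) ->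
  (forall s, continuity_pt G s) ->
  Rabs ((1 - lam) * F v + lam * F u
        - th / Rpower (v - u) th * Integral (fun s => rpow (s - u) (th - 1) * F s) u v)
  <= Rpower e (q / (q - 1)) * RInt (fun s => rpow (Rabs (rpow ((s - u) / (v - u)) th - lam)) (q / (q - 1))) u v / (q / (q - 1))
     + Rpower e (- q) * RInt G u v / q.
Proof.
intros Huv Hth Hlam Hq He Hdel HF HG HGc.
set (p := q / (q - 1)).
assert (Hp : 0 < p) by (unfold p; apply Rdiv_lt_0_compat; lra).
assert (HFc : forall s, u - del < s < v + del -> continuity_pt F s).
{ intros s Hs. apply derivable_continuous_pt. exists (F' s). apply HF; auto. }
set (gh := ghat F u th).
assert (Hgh : forall s, u - del < s < v + del -> continuity_pt gh s).
{ intros s Hs. apply (ghat_cpt F F' u th (u - del) (v + del)); auto; lra. }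
set (Psi := fun y => F u / th * rpow (y - u) th + RInt gh u y).
assert (HPd : forall y, u < y < v + del -> is_derive Psi y (rpow (y - u) (th - 1) * F y)).
{ intros y Hy. unfold Psi. eapply is_derive_val.
  apply D_plus.
  - apply is_derive_scal. apply D_rpow. apply D_shift. lra.
  - apply is_derive_Reals. apply (deriv_RInt_loc gh u (u - del) (v + del)); auto; lra.
  - unfold gh, ghat. destruct (Rlt_dec u y); [|lra]. rewrite rpow_pos by lra. field; lra. }
assert (HPc : forall y, u - del < y < v + del -> continuity_pt Psi y).
{ intros y Hy. unfold Psi. apply continuity_pt_plus.
  apply continuity_pt_mult. apply cst_cpt. apply cpt_shift_rpow; auto.
  apply derivable_continuous_pt. exists (gh y).
  apply (deriv_RInt_loc gh u (u - del) (v + del)); auto; lra. }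
assert (HPu : Psi u = 0).
{ unfold Psi. rewrite Rminus_eq_0, rpow_zero by lra. rewrite RInt_point_R. ring. }
assert (HI : Integral (fun s => rpow (s - u) (th - 1) * F s) u v = Psi v).
{ rewrite (Integral_antideriv _ Psi); auto. rewrite HPu; ring.
  intros y Hy. split. apply is_derive_Reals, HPd; lra.
  apply continuity_pt_mult. 
  apply (continuity_pt_comp (fun s => s - u) (fun t => rpow t (th - 1))).
  apply continuity_pt_minus. apply continuity_pt_id. apply cst_cpt.
  apply rpow_cpt_pos. lra. apply HFc; lra.
  apply HPc; lra. apply HPc; lra. }
set (w := fun s => rpow ((s - u) / (v - u)) th - lam).
assert (Hwc : forall s, continuity_pt w s).
{ intros s. unfold w. apply continuity_pt_minus; [|apply cst_cpt].
  apply (continuity_pt_comp (fun s => (s - u) / (v - u)) (fun t => rpow t th)).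
  apply cpt_of_derive with (/ (v - u)). apply D_lin. apply rpow_cpt; auto. }
set (K := th / Rpower (v - u) th).
assert (Hwd : forall t, u < t -> is_derive w t (K * Rpower (t - u) (th - 1))).
{ intros t Ht. unfold w. eapply is_derive_val. apply D_minus. apply D_rpow. apply D_lin.
  apply Rdiv_lt_0_compat; lra. apply D_const.
  unfold K. rewrite Rpower_div by lra. rewrite (Rpower_m1 (v - u) th) by lra.
  assert (0 < Rpower (v - u) (th - 1)) by apply Rpower_pos. field. split; lra. }
set (W := fun s => rpow (Rabs (w s)) p).
assert (HWc : forall s, continuity_pt W s).
{ intros s. unfold W. apply (continuity_pt_comp (fun s => Rabs (w s)) (fun t => rpow t p)).
  apply (continuity_pt_comp w Rabs). apply Hwc. apply Rcontinuity_abs. apply rpow_cpt; auto. }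
set (Y := fun s => Rpower e p * W s / p + Rpower e (- q) * G s / q).
assert (HYc : forall s, continuity_pt Y s).
{ intros s. unfold Y. apply continuity_pt_plus; unfold Rdiv; apply continuity_pt_mult;
  try apply cst_cpt; apply continuity_pt_mult; try apply cst_cpt; auto. }
assert (HwY : forall s, u <= s <= v -> Rabs (w s * F' s) <= Y s).
{ intros s Hs. rewrite Rabs_mult. eapply Rle_trans.
  apply (young_eps (Rabs (w s)) (Rabs (F' s)) q e); auto; apply Rabs_pos.
  unfold Y, W. fold p. apply Rplus_le_compat_l. unfold Rdiv.
  apply Rmult_le_compat_r. left; apply Rinv_0_lt_compat; lra.
  apply Rmult_le_compat_l. left; apply Rpower_pos. apply HG; auto. }
assert (HY0 : forall s, u <= s <= v -> 0 <= Y s).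
{ intros s Hs. eapply Rle_trans; [|apply HwY; auto]. apply Rabs_pos. }
set (E := fun c => w v * F v - w c * F c - K * (Psi v - Psi c)).
assert (Claim1 : forall c, u < c < v -> Rabs (E c) <= RInt Y c v).
{ intros c Hc.
  set (Ec := fun t => w t * F t - w c * F c - K * (Psi t - Psi c)).
  assert (HEd : forall t, u < t < v + del -> is_derive Ec t (w t * F' t)).
  { intros t Ht. unfold Ec. eapply is_derive_val. apply D_minus. apply D_minus. apply D_mult.
    apply Hwd; lra. apply is_derive_Reals, HF; lra. apply D_const. apply is_derive_scal.
    apply D_minus. apply HPd; lra. apply D_const.
    rewrite rpow_pos by lra. ring. }
  set (H := fun t => RInt Y c t).
  assert (HHd : forall t, is_derive H t (Y t)) by (intros; apply D_RInt; auto).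
  assert (HEc : Ec c = 0) by (unfold Ec; ring).
  assert (HHc : H c = 0) by (unfold H; apply RInt_point_R).
  destruct (MVT_gen (fun t => Ec t - H t) c v (fun t => w t * F' t - Y t)) as [x1 [Hx1 Eq1]].
  { intros x Hx. rewrite Rmin_left, Rmax_right in Hx by lra. apply D_minus; auto. apply HEd; lra. }
  { intros x Hx. rewrite Rmin_left, Rmax_right in Hx by lra. apply cpt_of_derive with (w x * F' x - Y x).
    apply D_minus; auto. apply HEd; lra. }
  destruct (MVT_gen (fun t => Ec t + H t) c v (fun t => w t * F' t + Y t)) as [x2 [Hx2 Eq2]].
  { intros x Hx. rewrite Rmin_left, Rmax_right in Hx by lra. apply D_plus; auto. apply HEd; lra. }
  { intros x Hx. rewrite Rmin_left, Rmax_right in Hx by lra. apply cpt_of_derive with (w x * F' x + Y x).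
    apply D_plus; auto. apply HEd; lra. }
  rewrite Rmin_left, Rmax_right in Hx1, Hx2 by lra.
  assert (B1 := HwY x1 ltac:(lra)). assert (B2 := HwY x2 ltac:(lra)).
  apply Rabs_le_inv' in B1. apply Rabs_le_inv' in B2.
  assert (E1 : (w x1 * F' x1 - Y x1) * (v - c) <= 0) by nra.
  assert (E2 : 0 <= (w x2 * F' x2 + Y x2) * (v - c)) by nra.
  change (E c) with (Ec v). fold (H v). apply Rabs_le. lra. }
assert (HexY : forall a b, ex_RInt Y a b) by (intros; apply ex_RInt_glob; auto).
assert (Claim2 : forall c, u <= c <= v -> RInt Y c v <= RInt Y u v).
{ intros c Hc. rewrite <- (RInt_Chasles_R Y u c v); auto.
  assert (0 <= RInt Y u c). apply RInt_ge0; auto. lra. intros x Hx; apply HY0; lra. lra. }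
assert (Claim3 : continuity_pt E u).
{ unfold E. apply continuity_pt_minus. apply continuity_pt_minus. apply cst_cpt.
  apply continuity_pt_mult; auto. apply HFc; lra.
  apply continuity_pt_mult. apply cst_cpt. apply continuity_pt_minus. apply cst_cpt. apply HPc; lra. }
assert (Claim4 : Rabs (E u) <= RInt Y u v).
{ destruct (Rle_or_lt (Rabs (E u)) (RInt Y u v)) as [|Hlt]; auto. exfalso.
  destruct (cpt_eps E u Claim3 (Rabs (E u) - RInt Y u v)) as [d [Hd Hdd]]; [lra|].
  set (c := u + Rmin d (v - u) / 2).
  assert (Rmin d (v - u) <= d) by apply Rmin_l. assert (Rmin d (v - u) <= v - u) by apply Rmin_r.
  assert (0 < Rmin d (v - u)) by (apply Rmin_pos; lra).
  assert (A1 := Hdd c ltac:(unfold c; rewrite Rabs_pos_eq; lra)).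
  assert (A2 := Claim1 c ltac:(unfold c; lra)).
  assert (A3 := Claim2 c ltac:(unfold c; lra)).
  assert (Rabs (E u) <= Rabs (E c) + Rabs (E c - E u)).
  { replace (E u) with (E c - (E c - E u)) at 1 by ring.
    eapply Rle_trans. apply Rabs_triang. rewrite Rabs_Ropp. lra. }
  lra. }
assert (Hwv : w v = 1 - lam).
{ unfold w. replace ((v - u) / (v - u)) with 1 by (field; lra). rewrite rpow_1; ring. }
assert (Hwu : w u = - lam).
{ unfold w. replace ((u - u) / (v - u)) with 0 by (field; lra). rewrite rpow_zero by lra. ring. }
assert (EQ : E u = (1 - lam) * F v + lam * F u - K * Integral (fun s => rpow (s - u) (th - 1) * F s) u v).
{ unfold E. rewrite Hwv, Hwu, HI, HPu. ring. }
rewrite <- EQ.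
eapply Rle_trans. apply Claim4.
right. unfold Y.
rewrite (RInt_ext_R _ (fun s => (Rpower e p / p) * W s + (Rpower e (- q) / q) * G s)).
2: { intros; unfold Rdiv; ring. }
rewrite RInt_lin2. unfold W, w. unfold Rdiv; ring.
apply ex_RInt_glob; auto. apply ex_RInt_glob; auto.
Qed.
Lemma D_ext_R (f g : R -> R) x l : (forall t, f t = g t) -> is_derive f x l -> is_derive g x l.
Proof. apply (@is_derive_ext R_AbsRing R_NormedModule). Qed.

Lemma gc_unique th L1 L2 : gamma_conv th L1 -> gamma_conv th L2 -> L1 = L2.
Proof.
intros [_ H1] [_ H2].
destruct (Req_dec L1 L2) as [|Hne]; auto. exfalso.
assert (He : 0 < Rabs (L1 - L2) / 2). apply Rdiv_lt_0_compat; [apply Rabs_pos_lt; lra|lra].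
destruct (H1 _ He) as [d1 [Hd1 [M1 K1]]]. destruct (H2 _ He) as [d2 [Hd2 [M2 K2]]].
set (c := Rmin d1 d2 / 2). set (d := Rmax (Rmax M1 M2) c + 1).
assert (Rmin d1 d2 <= d1) by apply Rmin_l. assert (Rmin d1 d2 <= d2) by apply Rmin_r.
assert (0 < Rmin d1 d2) by (apply Rmin_pos; auto).
assert (Rmax M1 M2 <= Rmax (Rmax M1 M2) c) by apply Rmax_l. assert (c <= Rmax (Rmax M1 M2) c) by apply Rmax_r.
assert (M1 <= Rmax M1 M2) by apply Rmax_l. assert (M2 <= Rmax M1 M2) by apply Rmax_r.
assert (A1 := K1 c d ltac:(unfold c; lra) ltac:(unfold d; lra) ltac:(unfold d; lra)).
assert (A2 := K2 c d ltac:(unfold c; lra) ltac:(unfold d; lra) ltac:(unfold d; lra)).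
set (X := Defs.RInt _ c d) in *.
assert (Rabs (L1 - L2) <= Rabs (X - L1) + Rabs (X - L2)).
replace (L1 - L2) with (-(X - L1) + (X - L2)) by ring.
eapply Rle_trans. apply Rabs_triang. rewrite Rabs_Ropp; lra. lra.
Qed.

Lemma Gamma_eq th L : gamma_conv th L -> Gamma th = L.
Proof.
intros H. unfold Gamma. apply gc_unique with th; auto.
apply (epsilon_spec (inhabits 0) (fun L => gamma_conv th L)). exists L; auto.
Qed.

Lemma expm_cpt x : continuity_pt (fun t => exp (- t)) x.
Proof. apply cpt_of_derive with (exp (- x) * (-1)). apply D_exp.
eapply is_derive_val. apply (D_ext_R (fun t => -1 * t)). intros; ring.
apply is_derive_scal. apply D_id. ring. Qed.

Lemma D_expm x : is_derive (fun t => exp (- t)) x (- exp (- x)).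
Proof. eapply is_derive_val. apply D_exp.
apply (D_ext_R (fun t => -1 * t)). intros; ring.
apply is_derive_scal. apply D_id. ring. Qed.

Lemma gamma_conv_of th (Psi : R -> R) L :
  (forall y, 0 < y -> is_derive Psi y (rpow y (th - 1) * exp (- y))) ->
  continuity_pt Psi 0 -> Psi 0 = 0 ->
  (forall eps, 0 < eps -> exists M, forall d, M < d -> Rabs (Psi d - L) < eps) ->
  gamma_conv th L.
Proof.
intros Hd Hc H0 Hlim.
assert (Hgc : forall y, 0 < y -> continuity_pt (fun t => rpow t (th - 1) * exp (- t)) y).
{ intros y Hy. apply continuity_pt_mult. apply rpow_cpt_pos; auto. apply expm_cpt. }
assert (Hex : forall c d, 0 < c -> c <= d -> ex_RInt (fun t => rpow t (th - 1) * exp (- t)) c d).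
{ intros c d Hc' Hcd. apply ex_RInt_cont. intros z Hz.
  rewrite Rmin_left, Rmax_right in Hz by lra. apply cpt_cont; apply Hgc; lra. }
split.
- intros c d Hc' Hcd. constructor. apply ex_RInt_Reals_0; auto.
- intros eps He. destruct (cpt_eps Psi 0 Hc (eps / 2)) as [del [Hdel Kd]]; [lra|].
  destruct (Hlim (eps / 2)) as [M HM]; [lra|].
  exists del. split; auto. exists M. intros c d Hc' Hd' Hcd.
  rewrite DRInt_eq by (apply ex_RInt_Reals_0; apply Hex; lra).
  replace (RInt (fun t => rpow t (th - 1) * exp (- t)) c d) with (Psi d - Psi c).
  2: { symmetry. apply RInt_uniq. apply (is_RInt_derive Psi).
       intros x Hx. rewrite Rmin_left, Rmax_right in Hx by lra. apply Hd; lra.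
       intros x Hx. rewrite Rmin_left, Rmax_right in Hx by lra. apply cpt_cont, Hgc; lra. }
  assert (A1 := Kd c ltac:(rewrite Rminus_0_r, Rabs_pos_eq; lra)). rewrite H0, Rminus_0_r in A1.
  assert (A2 := HM d Hd').
  replace (Psi d - Psi c - L) with ((Psi d - L) - Psi c) by ring.
  eapply Rle_lt_trans. apply Rabs_triang. rewrite Rabs_Ropp. lra.
Qed.

Lemma ln_le_sub1 x : 0 < x -> ln x <= x - 1.
Proof. intros. assert (H1 := exp_ineq1_le (ln x)). rewrite exp_ln in H1; auto. lra. Qed.

Lemma exp_le' x y : x <= y -> exp x <= exp y.
Proof. intros [H|H]. left; apply exp_increasing; auto. subst; lra. Qed.

Lemma ln_ge0 y : 1 <= y -> 0 <= ln y.
Proof. intros [H|H]. rewrite <- ln_1. left; apply ln_increasing; lra. subst; rewrite ln_1; lra. Qed.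

Lemma Rpower_exp_bound y b : 1 <= y -> Rpower y b <= exp (2 * b * b) * exp (y / 2).
Proof.
intros Hy. unfold Rpower. rewrite <- exp_plus. apply exp_le'.
set (s := sqrt y). assert (Hs : 0 < s) by (apply sqrt_lt_R0; lra).
assert (Hss : s * s = y) by (apply sqrt_sqrt; lra).
assert (Hl : ln y = 2 * ln s) by (rewrite <- Hss, ln_mult; auto; ring).
assert (Hls := ln_le_sub1 s Hs). assert (Hl0 := ln_ge0 y Hy).
assert (b * ln y <= Rabs b * ln y) by (apply Rmult_le_compat_r; auto; apply Rle_abs).
assert (Rabs b * ln y <= Rabs b * (2 * s)) by (apply Rmult_le_compat_l; [apply Rabs_pos|lra]).
assert (Rabs b * Rabs b = b * b) by (rewrite <- Rabs_mult; apply Rabs_pos_eq; nra).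
assert (0 <= (2 * Rabs b - s) * (2 * Rabs b - s)) by apply Rle_0_sqr.
assert (2 * Rabs b * s <= 2 * b * b + y / 2).
{ rewrite <- Hss. nra. }
lra.
Qed.
Lemma D_expm_half (x : R) : is_derive (fun t => exp (- (t / 2))) x (- / 2 * exp (- (x / 2))).
Proof. eapply is_derive_val. apply D_exp.
apply (D_ext_R (fun t => - / 2 * t)). intros; field.
apply is_derive_scal. apply D_id. cbv beta. simpl. ring. Qed.

Lemma Gamma_ratio th : 0 < th -> Gamma (th + 1) * / Gamma th = th.
Proof.
intros Hth.
set (gh := ghat (fun s => exp (- s)) 0 th).
assert (Hgh : forall s, continuity_pt gh s).
{ intros s. apply (ghat_cpt (fun s => exp (- s)) (fun s => - exp (- s)) 0 th (Rmin s 0 - 1) (Rmax s 0 + 1)); auto.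
  assert (Rmin s 0 <= 0) by apply Rmin_r. lra.
  intros; apply is_derive_Reals, D_expm.
  assert (Rmin s 0 <= s) by apply Rmin_l. assert (s <= Rmax s 0) by apply Rmax_l. lra. }
set (Psi := fun y => / th * rpow y th + RInt gh 0 y).
assert (HPd : forall y, 0 < y -> is_derive Psi y (rpow y (th - 1) * exp (- y))).
{ intros y Hy. unfold Psi. eapply is_derive_val. apply D_plus. apply is_derive_scal.
  apply is_derive_rpow; auto. apply D_RInt; auto.
  unfold gh, ghat. destruct (Rlt_dec 0 y); [|lra].
  rewrite Rminus_0_r, Ropp_0, exp_0, rpow_pos by auto. field; lra. }
assert (HPc : forall y, continuity_pt Psi y).
{ intros y. unfold Psi. apply continuity_pt_plus. apply continuity_pt_mult. apply cst_cpt.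
  apply rpow_cpt; auto. apply cpt_of_derive with (gh y). apply D_RInt; auto. }
assert (HP0 : Psi 0 = 0).
{ unfold Psi. rewrite rpow_zero, RInt_point_R by lra. ring. }
set (df := fun t => if Rlt_dec 0 t then rpow t (th - 1) * exp (- t) else 1).
assert (Hdf : forall t, 0 < df t).
{ intros t. unfold df. destruct (Rlt_dec 0 t). rewrite rpow_pos by auto.
  apply Rmult_lt_0_compat. apply Rpower_pos. apply exp_pos. lra. }
assert (Hmono : forall a b, 0 <= a < b -> Psi a < Psi b).
{ intros a b Hab. destruct (MVT_gen Psi a b df) as [c [Hc Eq]].
  - intros x Hx. rewrite Rmin_left, Rmax_right in Hx by lra. unfold df.
    destruct (Rlt_dec 0 x); [|lra]. apply HPd; lra.
  - intros; apply HPc.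
  - assert (0 < df c * (b - a)) by (apply Rmult_lt_0_compat; auto; lra). lra. }
assert (Hmono' : forall a b, 0 <= a <= b -> Psi a <= Psi b).
{ intros a b Hab. destruct (Req_dec a b). subst; lra. left; apply Hmono; lra. }
assert (HP1 : 0 < Psi 1) by (rewrite <- HP0; apply Hmono; lra).
set (C := exp (2 * (th - 1) * (th - 1))).
assert (HC : 0 < C) by apply exp_pos.
assert (Hbdd : forall y, 1 <= y -> Psi y <= Psi 1 + 2 * C * exp (- (1 / 2))).
{ intros y Hy. destruct (Req_dec y 1). subst. assert (0 < exp (- (1/2))) by apply exp_pos. nra.
  set (Z := fun t => Psi t + 2 * C * exp (- (t / 2))).
  set (dZ := fun t => rpow t (th - 1) * exp (- t) - C * exp (- (t / 2))).
  destruct (MVT_gen Z 1 y dZ) as [c [Hc Eq]].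
  - intros x Hx. rewrite Rmin_left, Rmax_right in Hx by lra. unfold Z, dZ.
    eapply is_derive_val. apply D_plus. apply HPd; lra. apply is_derive_scal. apply D_expm_half. field.
  - intros x Hx. rewrite Rmin_left, Rmax_right in Hx by lra. unfold Z.
    apply continuity_pt_plus. apply HPc. apply cpt_of_derive with (2 * C * (- / 2 * exp (- (x / 2)))).
    apply is_derive_scal. apply D_expm_half.
  - rewrite Rmin_left, Rmax_right in Hc by lra.
    assert (dZ c <= 0).
    { unfold dZ. rewrite rpow_pos by lra.
      assert (B := Rpower_exp_bound c (th - 1) ltac:(lra)). fold C in B.
      assert (Rpower c (th - 1) * exp (- c) <= C * exp (c / 2) * exp (- c))
        by (apply Rmult_le_compat_r; [left; apply exp_pos|auto]).
      replace (C * exp (c / 2) * exp (- c)) with (C * exp (- (c / 2))) in H0.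
      lra. rewrite Rmult_assoc, <- exp_plus. f_equal. f_equal. field. }
    unfold Z in Eq. assert (dZ c * (y - 1) <= 0) by nra.
    assert (0 < exp (- (y / 2))) by apply exp_pos. nra. }
set (E := fun r => exists y, 1 <= y /\ r = Psi y).
destruct (completeness E) as [L HL].
{ exists (Psi 1 + 2 * C * exp (- (1 / 2))). intros r [y [Hy ->]]. apply Hbdd; auto. }
{ exists (Psi 1). exists 1. split; auto; lra. }
assert (HLub : forall y, 1 <= y -> Psi y <= L) by (intros y Hy; apply (proj1 HL); exists y; auto).
assert (Hlim : forall eps, 0 < eps -> exists M, forall d, M < d -> Rabs (Psi d - L) < eps).
{ intros eps He. destruct (classic (exists y0, 1 <= y0 /\ L - eps < Psi y0)) as [[y0 [Hy0 Hy0']]|Hn].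
  - exists y0. intros d Hd. assert (Psi y0 <= Psi d) by (apply Hmono'; lra).
    assert (Psi d <= L) by (apply HLub; lra). rewrite Rabs_left1 by lra. lra.
  - exfalso. assert (L <= L - eps). apply (proj2 HL). intros r [y [Hy ->]].
    destruct (Rle_or_lt (Psi y) (L - eps)); auto. exfalso; apply Hn; exists y; auto. lra. }
assert (G1 : gamma_conv th L) by (apply (gamma_conv_of th Psi); auto; intros; apply HPd; auto).
assert (HLp : 0 < L) by (assert (Psi 1 <= L) by (apply HLub; lra); lra).
set (Psi2 := fun y => th * Psi y - rpow y th * exp (- y)).
assert (G2 : gamma_conv (th + 1) (th * L)).
{ apply (gamma_conv_of (th + 1) Psi2).
  - intros y Hy. unfold Psi2. eapply is_derive_val. apply D_minus. apply is_derive_scal. apply HPd; auto.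
    apply D_mult. apply is_derive_rpow; auto. apply D_expm.
    rewrite !rpow_pos by auto. replace (th + 1 - 1) with th by ring.
    rewrite (Rpower_m1 y th) by auto. ring.
  - unfold Psi2. apply continuity_pt_minus. apply continuity_pt_mult. apply cst_cpt. apply HPc.
    apply continuity_pt_mult. apply rpow_cpt; auto. apply expm_cpt.
  - unfold Psi2. rewrite HP0, rpow_zero by lra. ring.
  - intros eps He. destruct (Hlim (eps / (2 * th))) as [M1 HM1].
    apply Rdiv_lt_0_compat; lra.
    set (C2 := exp (2 * th * th)). assert (HC2 : 0 < C2) by apply exp_pos.
    exists (Rmax (Rmax M1 1) (4 * C2 / eps)). intros d Hd.
    assert (Rmax M1 1 <= Rmax (Rmax M1 1) (4 * C2 / eps)) by apply Rmax_l.
    assert (4 * C2 / eps <= Rmax (Rmax M1 1) (4 * C2 / eps)) by apply Rmax_r.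
    assert (M1 <= Rmax M1 1) by apply Rmax_l. assert (1 <= Rmax M1 1) by apply Rmax_r.
    assert (A1 := HM1 d ltac:(lra)).
    assert (A2 : Rabs (th * Psi d - th * L) < eps / 2).
    { replace (th * Psi d - th * L) with (th * (Psi d - L)) by ring.
      rewrite Rabs_mult, Rabs_pos_eq by lra.
      apply Rmult_lt_compat_l with (r := th) in A1; auto.
      replace (th * (eps / (2 * th))) with (eps / 2) in A1 by (field; lra). auto. }
    assert (A3 : rpow d th * exp (- d) < eps / 2).
    { rewrite rpow_pos by lra.
      assert (B := Rpower_exp_bound d th ltac:(lra)). fold C2 in B.
      assert (H4 : Rpower d th * exp (- d) <= C2 * exp (d / 2) * exp (- d))
        by (apply Rmult_le_compat_r; [left; apply exp_pos|auto]).
      replace (C2 * exp (d / 2) * exp (- d)) with (C2 / exp (d / 2)) in H4.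
      2: { unfold Rdiv. rewrite Rmult_assoc. f_equal. rewrite <- exp_Ropp, <- exp_plus. f_equal. field. }
      assert (Hx := exp_ineq1_le (d / 2)).
      assert (H5 : 4 * C2 / eps < d) by lra.
      assert (C2 / exp (d / 2) < eps / 2).
      { apply Rmult_lt_reg_r with (exp (d / 2)). apply exp_pos.
        unfold Rdiv. rewrite Rmult_assoc, Rinv_l by (apply Rgt_not_eq, exp_pos). rewrite Rmult_1_r.
        assert (4 * C2 / eps * eps = 4 * C2) by (field; lra).
        assert (4 * C2 < d * eps). { apply Rmult_lt_compat_r with (r := eps) in H5; auto. lra. }
        nra. }
      lra. }
    unfold Psi2. replace (th * Psi d - rpow d th * exp (- d) - th * L) with ((th * Psi d - th * L) - rpow d th * exp (- d)) by ring.
    eapply Rle_lt_trans. apply Rabs_triang. rewrite Rabs_Ropp.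
    rewrite (Rabs_pos_eq (rpow d th * exp (- d))). lra.
    apply Rmult_le_pos. apply rpow_ge0. left; apply exp_pos. }
rewrite (Gamma_eq _ _ G1), (Gamma_eq _ _ G2). field; lra.
Qed.
Lemma RInt_antideriv (g Psi : R -> R) a b : a < b ->
  (forall x, continuity_pt g x) ->
  (forall y, a < y < b -> is_derive Psi y (g y)) ->
  continuity_pt Psi a -> continuity_pt Psi b ->
  RInt g a b = Psi b - Psi a.
Proof.
intros Hab Hg Hd Ca Cb.
destruct (MVT_gen (fun y => Psi y - RInt g a y) a b (fun _ => 0)) as [c [_ Eq]].
- intros x Hx. rewrite Rmin_left, Rmax_right in Hx by lra. eapply is_derive_val.
  apply D_minus. apply Hd; lra. apply D_RInt; auto. ring.
- intros x Hx. rewrite Rmin_left, Rmax_right in Hx by lra. apply continuity_pt_minus.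
  destruct (Req_dec x a). subst; auto. destruct (Req_dec x b). subst; auto.
  apply cpt_of_derive with (g x). apply Hd; lra.
  apply cpt_of_derive with (g x). apply D_RInt; auto.
- rewrite RInt_point_R in Eq. lra.
Qed.

Lemma RInt_affine (k : R -> R) u v : u < v -> (forall x, continuity_pt k x) ->
  RInt (fun s => k ((s - u) / (v - u))) u v = (v - u) * RInt k 0 1.
Proof.
intros Huv Hk.
assert (E := @RInt_comp_lin R_CompleteNormedModule k (/ (v - u)) (- u / (v - u)) u v).
replace (/ (v - u) * u + - u / (v - u)) with 0 in E by (field; lra).
replace (/ (v - u) * v + - u / (v - u)) with 1 in E by (field; lra).
rewrite <- E by (apply ex_RInt_glob; auto).
rewrite <- RInt_scal_R.
- apply RInt_ext_R. intros x _. unfold scal; simpl; unfold mult; simpl.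
  replace (/ (v - u) * x + - u / (v - u)) with ((x - u) / (v - u)) by (field; lra). field; lra.
- apply (@ex_RInt_comp_lin R_CompleteNormedModule k). replace (/ (v - u) * u + - u / (v - u)) with 0 by (field; lra).
  replace (/ (v - u) * v + - u / (v - u)) with 1 by (field; lra). apply ex_RInt_glob; auto.
Qed.

Definition hK (th p : R) := fun x => rpow (1 - rpow x th) p.

Lemma hK_cpt th p x : 0 < th -> 0 < p -> continuity_pt (hK th p) x.
Proof. intros. unfold hK. apply (continuity_pt_comp (fun x => 1 - rpow x th) (fun t => rpow t p)).
apply continuity_pt_minus. apply cst_cpt. apply rpow_cpt; auto. apply rpow_cpt; auto. Qed.

Lemma RInt_cpt (h : R -> R) a x : (forall y, continuity_pt h y) -> continuity_pt (fun z => RInt h a z) x.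
Proof. intros. apply cpt_of_derive with (h x). apply D_RInt; auto. Qed.

Lemma Rpower_inv_th y th : 0 < y -> 0 < th -> rpow (Rpower y (/ th)) th = y.
Proof. intros. rewrite rpow_pos by apply Rpower_pos. rewrite Rpower_mult, Rinv_l, Rpower_1; lra. Qed.

Lemma Beta1 th p : 0 < th -> 0 < p -> Beta (/ th) (p + 1) = th * RInt (hK th p) 0 1.
Proof.
intros Hth Hp. unfold Beta.
rewrite (Integral_antideriv _ (fun y => th * RInt (hK th p) 0 (rpow y (/ th)))).
- rewrite rpow_1, rpow_zero, RInt_point_R. ring. apply Rgt_not_eq, Rinv_0_lt_compat; auto.
- lra.
- intros y Hy. split.
  + apply is_derive_Reals. eapply is_derive_val. apply is_derive_scal.
    apply (D_comp (fun z => RInt (hK th p) 0 z) (fun y => rpow y (/ th))).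
    apply D_RInt. intros; apply hK_cpt; auto. apply is_derive_rpow; lra.
    unfold hK. rewrite (rpow_pos y) by lra. rewrite Rpower_inv_th by lra.
    replace (p + 1 - 1) with p by ring. rewrite !rpow_pos by lra. field; lra.
  + apply continuity_pt_mult. apply rpow_cpt_pos; lra.
    apply (continuity_pt_comp (fun t => 1 - t) (fun t => rpow t (p + 1 - 1))).
    apply continuity_pt_minus. apply cst_cpt. apply continuity_pt_id. apply rpow_cpt_pos; lra.
- apply continuity_pt_mult. apply cst_cpt.
  apply (continuity_pt_comp (fun y => rpow y (/ th)) (fun z => RInt (hK th p) 0 z)).
  apply rpow_cpt. apply Rinv_0_lt_compat; auto. apply RInt_cpt. intros; apply hK_cpt; auto.
- apply continuity_pt_mult. apply cst_cpt.
  apply (continuity_pt_comp (fun y => rpow y (/ th)) (fun z => RInt (hK th p) 0 z)).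
  apply rpow_cpt. apply Rinv_0_lt_compat; auto. apply RInt_cpt. intros; apply hK_cpt; auto.
Qed.
Lemma Beta2 th p : 0 < th -> 0 < p -> Beta (p + 1) (/ th) = th * RInt (hK th p) 0 1.
Proof.
intros Hth Hp. unfold Beta.
assert (Hc : forall x, continuity_pt (fun y => - th * RInt (hK th p) 0 (rpow (1 - y) (/ th))) x).
{ intros x. apply continuity_pt_mult. apply cst_cpt.
  apply (continuity_pt_comp (fun y => rpow (1 - y) (/ th)) (fun z => RInt (hK th p) 0 z)).
  apply (continuity_pt_comp (fun y => 1 - y) (fun t => rpow t (/ th))).
  apply continuity_pt_minus. apply cst_cpt. apply continuity_pt_id.
  apply rpow_cpt. apply Rinv_0_lt_compat; auto. apply RInt_cpt. intros; apply hK_cpt; auto. }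
rewrite (Integral_antideriv _ (fun y => - th * RInt (hK th p) 0 (rpow (1 - y) (/ th)))); auto.
- replace (1 - 1) with 0 by ring. replace (1 - 0) with 1 by ring.
  rewrite rpow_1, rpow_zero, RInt_point_R. ring. apply Rgt_not_eq, Rinv_0_lt_compat; auto.
- lra.
- intros y Hy. split.
  + apply is_derive_Reals. eapply is_derive_val. apply is_derive_scal.
    apply (D_comp (fun z => RInt (hK th p) 0 z) (fun y => rpow (1 - y) (/ th))).
    apply D_RInt. intros; apply hK_cpt; auto. apply D_rpow. apply D_minus. apply D_const. apply D_id. lra.
    unfold hK. rewrite (rpow_pos (1 - y)) by lra. rewrite Rpower_inv_th by lra.
    replace (p + 1 - 1) with p by ring. replace (1 - (1 - y)) with y by ring.
    rewrite !rpow_pos by lra. field; lra.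
  + apply continuity_pt_mult. apply rpow_cpt_pos; lra.
    apply (continuity_pt_comp (fun t => 1 - t) (fun t => rpow t (/ th - 1))).
    apply continuity_pt_minus. apply cst_cpt. apply continuity_pt_id. apply rpow_cpt_pos; lra.
Qed.

Lemma Beta3 p : 0 < p -> Beta (p + 1) 1 = / (p + 1).
Proof.
intros Hp. unfold Beta.
rewrite (Integral_antideriv _ (fun y => rpow y (p + 1) / (p + 1))).
- rewrite rpow_1, rpow_zero by lra. field; lra.
- lra.
- intros y Hy. split.
  + apply is_derive_Reals. eapply is_derive_val. apply (D_ext_R (fun y => / (p + 1) * rpow y (p + 1))).
    intros; unfold Rdiv; ring. apply is_derive_scal. apply is_derive_rpow; lra.
    replace (1 - 1) with 0 by ring. rewrite rpow_0, (rpow_pos y) by lra. replace (p + 1 - 1) with p by ring.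
    field; lra.
  + apply continuity_pt_mult. apply rpow_cpt; lra.
    replace (1 - 1) with 0 by ring. apply continuity_pt_ext with (f := fun _ => 1).
    intros; rewrite rpow_0; auto. apply cst_cpt.
- unfold Rdiv. apply continuity_pt_mult. apply rpow_cpt; lra. apply cst_cpt.
- unfold Rdiv. apply continuity_pt_mult. apply rpow_cpt; lra. apply cst_cpt.
Qed.

Definition Jf (th lam p : R) := fun y => rpow y p * rpow (lam + (1 - lam) * Rabs (1 - y)) (- (/ th + p + 1)).

Lemma Jf_cpt th lam p x : 0 < lam <= 1 -> 0 < p -> continuity_pt (Jf th lam p) x.
Proof.
intros Hl Hp. unfold Jf. apply continuity_pt_mult. apply rpow_cpt; auto.
apply (continuity_pt_comp (fun y => lam + (1 - lam) * Rabs (1 - y)) (fun t => rpow t (- (/ th + p + 1)))).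
apply continuity_pt_plus. apply cst_cpt. apply continuity_pt_mult. apply cst_cpt.
apply (continuity_pt_comp (fun y => 1 - y) Rabs). apply continuity_pt_minus. apply cst_cpt. apply continuity_pt_id.
apply Rcontinuity_abs. apply rpow_cpt_pos.
assert (0 <= Rabs (1 - x)) by apply Rabs_pos. nra.
Qed.

Lemma hyp_int th lam p : 0 < th -> 0 < lam < 1 -> 0 < p ->
  Integral (fun t => rpow t (p + 1 - 1) * rpow (1 - t) (p + 2 - (p + 1) - 1) * rpow (1 - (1 - lam) * t) (- (/ th + p + 1))) 0 1
  = RInt (Jf th lam p) 0 1.
Proof.
intros Hth Hl Hp.
rewrite (Integral_antideriv _ (fun y => RInt (Jf th lam p) 0 y)).
- rewrite RInt_point_R. ring.
- lra.
- intros y Hy. split.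
  + apply is_derive_Reals. eapply is_derive_val. apply D_RInt. intros; apply Jf_cpt; auto; lra.
    unfold Jf. replace (p + 1 - 1) with p by ring. replace (p + 2 - (p + 1) - 1) with 0 by ring.
    rewrite rpow_0. rewrite Rabs_pos_eq by lra. replace (lam + (1 - lam) * (1 - y)) with (1 - (1 - lam) * y) by ring. ring.
  + apply continuity_pt_mult. apply continuity_pt_mult. apply rpow_cpt; lra.
    apply (continuity_pt_comp (fun t => 1 - t) (fun t => rpow t (p + 2 - (p + 1) - 1))).
    apply continuity_pt_minus. apply cst_cpt. apply continuity_pt_id. apply rpow_cpt_ge0; lra.
    apply (continuity_pt_comp (fun t => 1 - (1 - lam) * t) (fun t => rpow t (- (/ th + p + 1)))).
    apply continuity_pt_minus. apply cst_cpt. apply continuity_pt_mult. apply cst_cpt. apply continuity_pt_id.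
    apply rpow_cpt_pos. nra.
- apply RInt_cpt. intros; apply Jf_cpt; auto; lra.
- apply RInt_cpt. intros; apply Jf_cpt; auto; lra.
Qed.
Definition kf (th lam p : R) := fun t => rpow (Rabs (rpow t th - lam)) p.

Lemma kf_cpt th lam p x : 0 < th -> 0 < p -> continuity_pt (kf th lam p) x.
Proof. intros. unfold kf. apply (continuity_pt_comp (fun t => Rabs (rpow t th - lam)) (fun t => rpow t p)).
apply (continuity_pt_comp (fun t => rpow t th - lam) Rabs). apply continuity_pt_minus.
apply rpow_cpt; auto. apply cst_cpt. apply Rcontinuity_abs. apply rpow_cpt; auto. Qed.

Lemma Rpower_1base y : Rpower 1 y = 1.
Proof. unfold Rpower; rewrite ln_1, Rmult_0_r; apply exp_0. Qed.

Lemma Rpower_lt_1 y th : 0 < y < 1 -> 0 < th -> Rpower y th < 1.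
Proof. intros. rewrite <- (Rpower_1base th). apply Rlt_Rpower_l; lra. Qed.

Lemma part1 th lam p : 0 < th -> 0 < lam < 1 -> 0 < p ->
  RInt (kf th lam p) 0 (Rpower lam (/ th)) = Rpower lam (/ th) * Rpower lam p * RInt (hK th p) 0 1.
Proof.
intros Hth Hl Hp. set (r := Rpower lam (/ th)).
assert (Hr : 0 < r) by apply Rpower_pos.
assert (Hrth : Rpower r th = lam) by (unfold r; rewrite Rpower_mult, Rinv_l, Rpower_1; lra).
assert (E := @RInt_comp_lin R_CompleteNormedModule (kf th lam p) r 0 0 1).
replace (r * 0 + 0) with 0 in E by ring. replace (r * 1 + 0) with r in E by ring.
rewrite <- E by (apply ex_RInt_glob; intros; apply kf_cpt; auto).
rewrite <- RInt_scal_R.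
2: { apply ex_RInt_glob. intros; apply hK_cpt; auto. }
apply RInt_ext_R. intros y Hy. rewrite Rmin_left, Rmax_right in Hy by lra.
unfold scal; simpl; unfold mult; simpl. rewrite Rmult_assoc. f_equal.
unfold kf, hK. replace (r * y + 0) with (r * y) by ring.
rewrite (rpow_pos (r * y) th) by (apply Rmult_lt_0_compat; lra). rewrite (rpow_pos y th) by lra.
rewrite <- Rpower_mult_distr by lra. rewrite Hrth.
assert (HY := Rpower_lt_1 y th ltac:(lra) Hth).
assert (HY0 : 0 < Rpower y th) by apply Rpower_pos.
rewrite Rabs_left by nra.
replace (- (lam * Rpower y th - lam)) with (lam * (1 - Rpower y th)) by ring.
rewrite !rpow_pos by nra.
rewrite <- Rpower_mult_distr by lra. reflexivity.
Qed.
Lemma part2 th lam p : 0 < th -> 0 < lam < 1 -> 0 < p ->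
  RInt (kf th lam p) (Rpower lam (/ th)) 1
  = Rpower lam (p + / th) / th * Rpower (1 - lam) (p + 1) * RInt (Jf th lam p) 0 1.
Proof.
intros Hth Hl Hp. set (z := 1 - lam).
assert (Hz : 0 < z < 1) by (unfold z; lra).
set (g := fun y => Rpower (lam / (1 - z * y)) (/ th)).
set (dg := fun y => / th * Rpower (lam / (1 - z * y)) (/ th - 1) * (lam * z / ((1 - z * y) * (1 - z * y)))).
assert (Hw : forall y, y < / z -> 0 < 1 - z * y).
{ intros y Hy. apply Rmult_lt_compat_l with (r := z) in Hy; [|lra].
  rewrite Rinv_r in Hy by lra. lra. }
assert (Hzi : 1 < / z). { rewrite <- Rinv_1. apply Rinv_lt_contravar; lra. }
assert (Hgd : forall y, y < / z -> is_derive g y (dg y)).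
{ intros y Hy. assert (Hwy := Hw y Hy). unfold g, dg. eapply is_derive_val.
  apply D_Rpower.
  apply (D_ext_R (fun y => lam * / (1 - z * y))). intros; unfold Rdiv; ring.
  apply is_derive_scal. apply D_inv. apply D_minus. apply D_const. apply is_derive_scal. apply D_id.
  lra. apply Rdiv_lt_0_compat; lra.
  simpl. field. lra. }
assert (Hdgc : forall y, y < / z -> continuity_pt dg y).
{ intros y Hy. assert (Hwy := Hw y Hy). unfold dg.
  assert (Hc1 : continuity_pt (fun y => 1 - z * y) y).
  { apply continuity_pt_minus. apply cst_cpt. apply continuity_pt_mult. apply cst_cpt. apply continuity_pt_id. }
  apply continuity_pt_mult. apply continuity_pt_mult. apply cst_cpt.
  apply (continuity_pt_comp (fun y => lam / (1 - z * y)) (fun t => Rpower t (/ th - 1))).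
  apply continuity_pt_div. apply cst_cpt. auto. lra.
  apply Rpower_cpt. apply Rdiv_lt_0_compat; lra.
  apply continuity_pt_div. apply cst_cpt. apply continuity_pt_mult; auto. nra. }
assert (E := @RInt_comp R_CompleteNormedModule (kf th lam p) g dg 0 1).
rewrite Rmin_left, Rmax_right in E by lra.
assert (Hg0 : g 0 = Rpower lam (/ th)) by (unfold g; f_equal; field).
assert (Hg1 : g 1 = 1).
{ unfold g. replace (lam / (1 - z * 1)) with 1 by (unfold z; field; lra). apply Rpower_1base. }
rewrite Hg0, Hg1 in E. rewrite <- E.
2: { intros; apply cpt_cont; apply kf_cpt; auto. }
2: { intros x Hx. split. apply Hgd; lra. apply cpt_cont, Hdgc; lra. }
rewrite <- RInt_scal_R.
2: { apply ex_RInt_glob; intros; apply Jf_cpt; lra. }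
apply RInt_ext_R. intros y Hy. rewrite Rmin_left, Rmax_right in Hy by lra.
unfold scal; simpl; unfold mult; simpl.
set (w := 1 - z * y). assert (Hwy : 0 < w) by (apply Hw; lra).
assert (HgY : rpow (g y) th = lam / w) by (unfold g; apply Rpower_inv_th; auto; apply Rdiv_lt_0_compat; lra).
unfold kf. rewrite HgY.
replace (lam / w - lam) with (lam * (1 - w) / w) by (field; lra).
replace (1 - w) with (z * y) by (unfold w; ring). replace (lam * (z * y)) with (lam * z * y) by ring.
assert (Hpos : 0 < lam * z * y / w) by (apply Rdiv_lt_0_compat; [repeat apply Rmult_lt_0_compat|]; lra).
rewrite Rabs_pos_eq by lra. rewrite rpow_pos by auto.
rewrite Rpower_div by (try apply Rmult_lt_0_compat; try apply Rmult_lt_0_compat; lra).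
rewrite <- !Rpower_mult_distr by (try apply Rmult_lt_0_compat; lra).
unfold dg. fold w. rewrite Rpower_div by lra.
unfold Jf. rewrite Rabs_pos_eq by lra. replace (lam + (1 - lam) * (1 - y)) with w by (unfold w, z; ring).
rewrite !rpow_pos by lra.
assert (A1 : Rpower lam (p + / th) = Rpower lam p * Rpower lam (/ th - 1) * lam).
{ replace (p + / th) with (p + ((/ th - 1) + 1)) by ring. rewrite !Rpower_plus, Rpower_1 by lra. ring. }
assert (A2 : Rpower z (p + 1) = Rpower z p * z) by (rewrite Rpower_plus, Rpower_1 by lra; ring).
assert (A3 : Rpower w (- (/ th + p + 1)) = / (Rpower w (/ th - 1) * Rpower w p * (w * w))).
{ rewrite Rpower_Ropp. f_equal. replace (/ th + p + 1) with ((/ th - 1) + p + 1 + 1) by ring.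
  rewrite !Rpower_plus, Rpower_1 by lra. ring. }
rewrite A1, A2, A3.
assert (0 < Rpower w (/ th - 1)) by apply Rpower_pos. assert (0 < Rpower w p) by apply Rpower_pos.
field. repeat split; lra.
Qed.
Lemma K_A4 th lam p : 0 < th -> 0 <= lam <= 1 -> 0 < p -> RInt (kf th lam p) 0 1 = A4 th lam p :> R.
Proof.
intros Hth Hl Hp. unfold A4.
destruct (Req_EM_T lam 0) as [E0|H0].
- subst lam. assert (Htp : 0 < th * p + 1) by nra. rewrite (RInt_ext_R _ (fun t => rpow t (th * p))).
  + rewrite (RInt_antideriv _ (fun y => rpow y (th * p + 1) / (th * p + 1))).
    * rewrite rpow_1, rpow_zero by lra. field. lra.
    * lra.
    * intros; apply rpow_cpt; apply Rmult_lt_0_compat; lra.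
    * intros y Hy. eapply is_derive_val. apply (D_ext_R (fun y => / (th * p + 1) * rpow y (th * p + 1))).
      intros; unfold Rdiv; ring. apply is_derive_scal. apply is_derive_rpow; lra.
      rewrite (rpow_pos y) by lra. replace (th * p + 1 - 1) with (th * p) by ring. field. lra.
    * unfold Rdiv; apply continuity_pt_mult. apply rpow_cpt; lra. apply cst_cpt.
    * unfold Rdiv; apply continuity_pt_mult. apply rpow_cpt; lra. apply cst_cpt.
  + intros x Hx. rewrite Rmin_left, Rmax_right in Hx by lra. unfold kf.
    rewrite Rminus_0_r. rewrite (rpow_pos x th) by lra. rewrite Rabs_pos_eq by (left; apply Rpower_pos).
    rewrite !rpow_pos by (try apply Rpower_pos; lra). apply Rpower_mult.
- destruct (Req_EM_T lam 1) as [E1|H1].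
  + subst lam. rewrite Beta2 by auto. rewrite (RInt_ext_R _ (hK th p)). rewrite <- Rmult_assoc, Rinv_l, Rmult_1_l; [reflexivity|lra].
    intros x Hx. rewrite Rmin_left, Rmax_right in Hx by lra. unfold kf, hK.
    rewrite (rpow_pos x th) by lra. assert (Rpower x th < 1) by (apply Rpower_lt_1; lra).
    rewrite Rabs_left by lra. f_equal. ring.
  + assert (Hl' : 0 < lam < 1) by lra.
    set (r := Rpower lam (/ th)).
    assert (Hr : 0 < r < 1).
    { split. apply Rpower_pos. apply Rpower_lt_1; auto. apply Rinv_0_lt_compat; auto. }
    rewrite <- (RInt_Chasles_R _ 0 r 1) by (apply ex_RInt_glob; intros; apply kf_cpt; auto).
    unfold r. rewrite part1, part2 by auto.
    unfold hyp2F1. rewrite hyp_int by auto.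
    replace (p + 2 - (p + 1)) with 1 by ring. rewrite Beta1, Beta3 by auto.
    rewrite !rpow_pos by lra.
    replace ((th * p + 1) / th) with (p + / th) by (field; lra).
    rewrite <- (Rpower_plus (/ th) p lam). replace (/ th + p) with (p + / th) by ring.
    field. lra.
Qed.
Lemma opt_bound P C D X q : 1 < q -> 0 <= P -> 0 <= C -> 0 < D ->
  (forall e, 0 < e -> Rabs X <= D * (Rpower e (q / (q - 1)) * P / (q / (q - 1)) + Rpower e (- q) * C / q)) ->
  Rabs X <= D * rpow P (/ (q / (q - 1))) * rpow C (/ q).
Proof.
intros Hq HP HC HD H. set (p := q / (q - 1)) in *.
assert (Hp : 1 < p) by (unfold p; apply (Rmult_lt_reg_r (q - 1)); [lra|]; unfold Rdiv; rewrite Rmult_assoc, Rinv_l by lra; lra).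
assert (Hpq : / p + / q = 1) by (unfold p; field; lra).
assert (HX := Rabs_pos X).
destruct HC as [HC|HC]; [destruct HP as [HP|HP]|].
- set (e := Rpower (C / P) (/ (p * q))).
  assert (He : 0 < e) by apply Rpower_pos.
  specialize (H e He).
  assert (E1 : Rpower e p * P = Rpower P (/ p) * Rpower C (/ q)).
  { unfold e. rewrite Rpower_mult. replace (/ (p * q) * p) with (/ q) by (field; lra).
    rewrite Rpower_div by auto.
    replace P with (Rpower P (/ p) * Rpower P (/ q)) at 2 by (rewrite <- Rpower_plus, Hpq; apply Rpower_1; auto).
    assert (0 < Rpower P (/ q)) by apply Rpower_pos. field; lra. }
  assert (E2 : Rpower e (- q) * C = Rpower P (/ p) * Rpower C (/ q)).
  { unfold e. rewrite Rpower_mult. replace (/ (p * q) * - q) with (- / p) by (field; lra).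
    rewrite Rpower_div by auto. rewrite !Rpower_Ropp.
    replace C with (Rpower C (/ p) * Rpower C (/ q)) at 2 by (rewrite <- Rpower_plus, Hpq; apply Rpower_1; auto).
    assert (0 < Rpower P (/ p)) by apply Rpower_pos. assert (0 < Rpower C (/ p)) by apply Rpower_pos.
    field; split; lra. }
  rewrite !rpow_pos by auto.
  replace (Rpower e p * P / p + Rpower e (- q) * C / q) with (Rpower e p * P * / p + Rpower e (- q) * C * / q) in H by (unfold Rdiv; ring).
  rewrite E1, E2 in H.
  replace (Rpower P (/ p) * Rpower C (/ q) * / p + Rpower P (/ p) * Rpower C (/ q) * / q)
    with (Rpower P (/ p) * Rpower C (/ q) * (/ p + / q)) in H by ring.
  rewrite Hpq, Rmult_1_r in H. rewrite Rmult_assoc; auto.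
- subst P. rewrite (rpow_zero (/ p)) by (apply Rgt_not_eq, Rinv_0_lt_compat; lra).
  rewrite Rmult_0_r, Rmult_0_l.
  destruct HX as [HX|HX]; [|lra]. exfalso.
  set (k := Rabs X * q / (D * (C + 1))).
  assert (Hk : 0 < k) by (unfold k; apply Rdiv_lt_0_compat; [apply Rmult_lt_0_compat|apply Rmult_lt_0_compat]; lra).
  set (e := Rpower k (- / q)).
  specialize (H e (Rpower_pos _ _)).
  assert (Rpower e (- q) = k) by (unfold e; rewrite Rpower_mult; replace (- / q * - q) with 1 by (field; lra); apply Rpower_1; auto).
  rewrite H0 in H. unfold k in H.
  assert (Rabs X <= Rabs X * (C / (C + 1))).
  { eapply Rle_trans. apply H. right. field. split; lra. }
  assert (C / (C + 1) < 1) by (apply (Rmult_lt_reg_r (C + 1)); [lra|]; unfold Rdiv; rewrite Rmult_assoc, Rinv_l by lra; lra).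
  nra.
- subst C. rewrite (rpow_zero (/ q)) by (apply Rgt_not_eq, Rinv_0_lt_compat; lra).
  rewrite Rmult_0_r.
  destruct HX as [HX|HX]; [|lra]. exfalso.
  set (k := Rabs X * p / (D * (P + 1))).
  assert (Hk : 0 < k) by (unfold k; apply Rdiv_lt_0_compat; [apply Rmult_lt_0_compat|apply Rmult_lt_0_compat]; lra).
  set (e := Rpower k (/ p)).
  specialize (H e (Rpower_pos _ _)).
  assert (Rpower e p = k) by (unfold e; rewrite Rpower_mult; replace (/ p * p) with 1 by (field; lra); apply Rpower_1; auto).
  rewrite H0 in H. unfold k in H.
  assert (Rabs X <= Rabs X * (P / (P + 1))).
  { eapply Rle_trans. apply H. right. field. repeat split; lra. }
  assert (P / (P + 1) < 1) by (apply (Rmult_lt_reg_r (P + 1)); [lra|]; unfold Rdiv; rewrite Rmult_assoc, Rinv_l by lra; lra).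
  nra.
Qed.
Lemma piece u v th lam q alpha m A B (F F' : R -> R) del :
  u < v -> 0 < th -> 0 <= lam <= 1 -> 1 < q -> 0 <= alpha <= 1 -> 0 < m -> 0 <= A -> 0 <= B -> 0 < del ->
  (forall s, u - del < s < v + del -> derivable_pt_lim F s (F' s)) ->
  (forall s, u <= s <= v -> rpow (Rabs (F' s)) q <=
      rpow ((s - u) / (v - u)) alpha * A + m * (1 - rpow ((s - u) / (v - u)) alpha) * B) ->
  Rabs ((1 - lam) * F v + lam * F u
        - th / Rpower (v - u) th * Integral (fun s => rpow (s - u) (th - 1) * F s) u v)
  <= (v - u) * rpow (A4 th lam (q / (q - 1))) (/ (q / (q - 1))) * rpow ((A + alpha * m * B) / (alpha + 1)) (/ q).
Proof.
intros Huv Hth Hlam Hq Hal Hm HA HB Hdel HF HG.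
set (p := q / (q - 1)).
assert (Hp : 0 < p) by (unfold p; apply Rdiv_lt_0_compat; lra).
set (gfun := fun t => rpow t alpha * A + m * (1 - rpow t alpha) * B).
assert (Hgc : forall x, continuity_pt gfun x).
{ intros x. unfold gfun. apply continuity_pt_plus. apply continuity_pt_mult. apply rpow_cpt_ge0; lra. apply cst_cpt.
  apply continuity_pt_mult. apply continuity_pt_mult. apply cst_cpt. apply continuity_pt_minus. apply cst_cpt.
  apply rpow_cpt_ge0; lra. apply cst_cpt. }
assert (Hgi : RInt gfun 0 1 = (A + alpha * m * B) / (alpha + 1) :> R).
{ rewrite (RInt_antideriv _ (fun t => A * (rpow t (alpha + 1) / (alpha + 1)) + m * B * (t - rpow t (alpha + 1) / (alpha + 1)))); auto.
  - rewrite rpow_1, rpow_zero by lra. field. lra.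
  - lra.
  - intros y Hy. unfold gfun. eapply is_derive_val. apply D_plus. apply is_derive_scal.
    apply (D_ext_R (fun t => / (alpha + 1) * rpow t (alpha + 1))). intros; unfold Rdiv; ring.
    apply is_derive_scal. apply is_derive_rpow; lra.
    apply is_derive_scal. apply D_minus. apply D_id.
    apply (D_ext_R (fun t => / (alpha + 1) * rpow t (alpha + 1))). intros; unfold Rdiv; ring.
    apply is_derive_scal. apply is_derive_rpow; lra.
    rewrite (rpow_pos y alpha) by lra. replace (alpha + 1 - 1) with alpha by ring. field. lra.
  - apply continuity_pt_plus. apply continuity_pt_mult. apply cst_cpt. unfold Rdiv. apply continuity_pt_mult.
    apply rpow_cpt; lra. apply cst_cpt. apply continuity_pt_mult. apply cst_cpt. apply continuity_pt_minus.
    apply continuity_pt_id. apply continuity_pt_mult. apply rpow_cpt; lra. apply cst_cpt.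
  - apply continuity_pt_plus. apply continuity_pt_mult. apply cst_cpt. unfold Rdiv. apply continuity_pt_mult.
    apply rpow_cpt; lra. apply cst_cpt. apply continuity_pt_mult. apply cst_cpt. apply continuity_pt_minus.
    apply continuity_pt_id. apply continuity_pt_mult. apply rpow_cpt; lra. apply cst_cpt. }
assert (HA4 : 0 <= A4 th lam p).
{ rewrite <- K_A4 by lra. apply RInt_ge0. lra. apply ex_RInt_glob; intros; apply kf_cpt; lra.
  intros; unfold kf; apply rpow_ge0. }
apply opt_bound; [lra|exact HA4| |lra|].
{ apply Rdiv_le_0_compat. assert (0 <= alpha * m * B) by (repeat apply Rmult_le_pos; lra). lra. lra. }
intros e He.
eapply Rle_trans.
apply (key_left u v th lam q e F F' (fun s => gfun ((s - u) / (v - u))) del); auto.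
{ intros s. apply (continuity_pt_comp (fun s => (s - u) / (v - u)) gfun).
  apply cpt_of_derive with (/ (v - u)). apply D_lin. apply Hgc. }
fold p.
replace (RInt (fun s => rpow (Rabs (rpow ((s - u) / (v - u)) th - lam)) p) u v)
  with (RInt (fun s => kf th lam p ((s - u) / (v - u))) u v) by reflexivity.
rewrite (RInt_affine (kf th lam p)) by (auto; intros; apply kf_cpt; lra).
rewrite (RInt_affine gfun) by auto.
rewrite K_A4 by lra. rewrite Hgi. right. unfold Rdiv. ring.
Qed.
Theorem theorem2p4 :
  forall (q : R), 1 < q ->
  let p := q / (q - 1) in
  forall (I : R -> Prop) (f f' : R -> R) (m alpha a b : R),
    is_interval I ->
    (forall x, I x -> 0 <= x) ->
    (forall x, interior I x -> derivable_pt_lim f x (f' x)) ->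
    0 < m <= 1 ->
    0 <= alpha <= 1 ->
    a < b ->
    interior I (m * a) -> interior I b ->
    alpha_m_convex alpha m (fun y => m * a <= y <= b) (fun y => rpow (Rabs (f' y)) q) ->
  forall (x lam th : R),
    a <= x <= b -> 0 <= lam <= 1 -> 0 < th ->
    Rabs (S_f f m x lam th a b) <=
      rpow m th * rpow (A4 th lam p) (/ p) / (b - a) *
      ( rpow (x - a) (th + 1) *
          rpow ((rpow (Rabs (f' (m * x))) q + alpha * m * rpow (Rabs (f' a)) q) / (alpha + 1)) (/ q)
      + rpow (b - x) (th + 1) *
          rpow ((rpow (Rabs (f' (m * x))) q + alpha * m * rpow (Rabs (f' b)) q) / (alpha + 1)) (/ q)).
Proof.
intros q Hq p I f f' m alpha a b HI Hnn Hder Hm Hal Hab Hia Hib Hconv x lam th Hx Hlam Hth.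
destruct Hia as [d1 Hd1]. destruct Hib as [d2 Hd2].
unfold included, disc in Hd1, Hd2.
assert (Hd1p := cond_pos d1). assert (Hd2p := cond_pos d2).
assert (HIma : I (m * a)) by (apply Hd1; rewrite Rminus_eq_0, Rabs_R0; auto).
assert (HIb : I b) by (apply Hd2; rewrite Rminus_eq_0, Rabs_R0; auto).
assert (Hma0 := Hnn _ HIma).
assert (Ha0 : 0 <= a) by (apply (Rmult_le_reg_l m); lra).
assert (HIr : forall y, m * a - d1 < y < b + d2 -> I y).
{ intros y Hy. destruct (Rle_or_lt y (m * a)).
  apply Hd1. rewrite Rabs_left1; lra.
  destruct (Rle_or_lt b y). apply Hd2. rewrite Rabs_pos_eq; lra.
  apply (HI (m * a) y b); auto; lra. }
set (del := Rmin d1 d2).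
assert (Hdel : 0 < del) by (apply Rmin_pos; auto).
assert (Hdel1 : del <= d1) by apply Rmin_l. assert (Hdel2 : del <= d2) by apply Rmin_r.
assert (Hdf : forall s, m * a - del < s < b + del -> derivable_pt_lim f s (f' s)).
{ intros s Hs. apply Hder. assert (Hr : 0 < Rmin (s - (m * a - d1)) (b + d2 - s)) by (apply Rmin_pos; lra).
  exists (mkposreal _ Hr). intros z Hz. unfold disc in Hz. simpl in Hz. apply Rabs_def2 in Hz.
  assert (Rmin (s - (m * a - d1)) (b + d2 - s) <= s - (m * a - d1)) by apply Rmin_l.
  assert (Rmin (s - (m * a - d1)) (b + d2 - s) <= b + d2 - s) by apply Rmin_r.
  apply HIr; lra. }
assert (Hmx : m * a <= m * x <= m * b) by (split; apply Rmult_le_compat_l; lra).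
assert (Hmb : m * b <= b) by nra.
assert (Hmaa : m * a <= a) by nra.
assert (GR := Gamma_ratio th Hth).
assert (HGn : Gamma th <> 0).
{ intros H0. rewrite H0, Rinv_0, Rmult_0_r in GR. lra. }
assert (HG1 : Gamma (th + 1) = th * Gamma th).
{ apply (Rmult_eq_reg_r (/ Gamma th)). rewrite GR. field; auto. apply Rinv_neq_0_compat; auto. }
set (IL := Integral (fun s => rpow (s - m * a) (th - 1) * f s) (m * a) (m * x)).
set (IR := Integral (fun s => rpow (m * b - s) (th - 1) * f s) (m * x) (m * b)).
set (C1 := (rpow (Rabs (f' (m * x))) q + alpha * m * rpow (Rabs (f' a)) q) / (alpha + 1)).
set (C2 := (rpow (Rabs (f' (m * x))) q + alpha * m * rpow (Rabs (f' b)) q) / (alpha + 1)).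
set (RA := rpow (A4 th lam p) (/ p)).
set (TL := rpow m (th - 1) * rpow (x - a) th / (b - a) * ((1 - lam) * f (m * x) + lam * f (m * a)) - th / (m * (b - a)) * IL).
set (TR := rpow m (th - 1) * rpow (b - x) th / (b - a) * ((1 - lam) * f (m * x) + lam * f (m * b)) - th / (m * (b - a)) * IR).
assert (Eq : S_f f m x lam th a b = TL + TR).
{ unfold S_f, RL_left, RL_right. fold IL IR. unfold TL, TR. rewrite HG1. field. repeat split; lra. }
assert (HRA : 0 <= RA) by apply rpow_ge0.
assert (Hrm : rpow m th = Rpower m (th - 1) * m) by (rewrite rpow_pos by lra; apply Rpower_m1; lra).
assert (BL : Rabs TL <= rpow m th * RA / (b - a) * (rpow (x - a) (th + 1) * rpow C1 (/ q))).
{ destruct (Req_dec x a) as [Exa|Hxa].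
  - unfold TL, IL. rewrite Exa, Rminus_eq_0, rpow_zero, Integral_deg by lra.
    replace (rpow m (th - 1) * 0 / (b - a) * ((1 - lam) * f (m * a) + lam * f (m * a)) - th / (m * (b - a)) * 0) with 0 by (field; lra).
    rewrite Rabs_R0. unfold Rdiv. repeat apply Rmult_le_pos; try apply rpow_ge0; auto.
    left; apply Rinv_0_lt_compat; lra.
  - assert (Hxa' : a < x) by lra.
    assert (P := piece (m * a) (m * x) th lam q alpha m (rpow (Rabs (f' (m * x))) q) (rpow (Rabs (f' a)) q) f f' del
      ltac:(nra) Hth Hlam Hq Hal ltac:(lra) (rpow_ge0 _ _) (rpow_ge0 _ _) Hdel).
    assert (Pr : forall s, m * a - del < s < m * x + del -> derivable_pt_lim f s (f' s)) by (intros; apply Hdf; lra).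
    specialize (P Pr).
    assert (Pg : forall s, m * a <= s <= m * x -> rpow (Rabs (f' s)) q <=
      rpow ((s - m * a) / (m * x - m * a)) alpha * rpow (Rabs (f' (m * x))) q +
      m * (1 - rpow ((s - m * a) / (m * x - m * a)) alpha) * rpow (Rabs (f' a)) q).
    { intros s Hs. set (t := (s - m * a) / (m * x - m * a)).
      assert (Ht : 0 <= t <= 1).
      { unfold t. split. apply Rdiv_le_0_compat; nra.
        apply (Rmult_le_reg_r (m * x - m * a)). nra. unfold Rdiv. rewrite Rmult_assoc, Rinv_l by nra. lra. }
      assert (Hpt : t * (m * x) + m * (1 - t) * a = s) by (unfold t; field; nra).
      assert (HC := Hconv (m * x) a t ltac:(lra) ltac:(lra) Ht ltac:(rewrite Hpt; lra)).
      simpl in HC. rewrite Hpt in HC. exact HC. }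
    specialize (P Pg). fold p RA C1 in P. unfold C1 in P.
    replace (m * x - m * a) with (m * (x - a)) in P by ring.
    rewrite <- Rpower_mult_distr in P by lra. fold IL in P.
    unfold TL.
    replace (rpow m (th - 1) * rpow (x - a) th / (b - a) * ((1 - lam) * f (m * x) + lam * f (m * a)) - th / (m * (b - a)) * IL)
      with (rpow m (th - 1) * rpow (x - a) th / (b - a) *
        ((1 - lam) * f (m * x) + lam * f (m * a) - th / (Rpower m th * Rpower (x - a) th) * IL)).
    2: { rewrite !rpow_pos by lra. rewrite (Rpower_m1 m th) by lra.
         assert (0 < Rpower m (th - 1)) by apply Rpower_pos. assert (0 < Rpower (x - a) th) by apply Rpower_pos.
         field. repeat split; lra. }
    rewrite Rabs_mult. rewrite (Rabs_pos_eq (rpow m (th - 1) * rpow (x - a) th / (b - a))).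
    2: { unfold Rdiv. repeat apply Rmult_le_pos; try apply rpow_ge0. left; apply Rinv_0_lt_compat; lra. }
    eapply Rle_trans. apply Rmult_le_compat_l. unfold Rdiv. repeat apply Rmult_le_pos; try apply rpow_ge0.
    left; apply Rinv_0_lt_compat; lra. exact P.
    rewrite Hrm. rewrite !(rpow_pos (x - a)) by lra. rewrite (rpow_pos m) by lra.
    rewrite (Rpower_m1 (x - a) (th + 1)) by lra. replace (th + 1 - 1) with th by ring.
    unfold C1. right. field. lra. }
assert (BR : Rabs TR <= rpow m th * RA / (b - a) * (rpow (b - x) (th + 1) * rpow C2 (/ q))).
{ destruct (Req_dec x b) as [Exb|Hxb].
  - unfold TR, IR. rewrite Exb, Rminus_eq_0, rpow_zero, Integral_deg by lra.
    replace (rpow m (th - 1) * 0 / (b - a) * ((1 - lam) * f (m * b) + lam * f (m * b)) - th / (m * (b - a)) * 0) with 0 by (field; lra).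
    rewrite Rabs_R0. unfold Rdiv. repeat apply Rmult_le_pos; try apply rpow_ge0; auto.
    left; apply Rinv_0_lt_compat; lra.
  - assert (Hxb' : x < b) by lra.
    assert (P := piece (- (m * b)) (- (m * x)) th lam q alpha m (rpow (Rabs (f' (m * x))) q) (rpow (Rabs (f' b)) q)
      (fun s => f (- s)) (fun s => - f' (- s)) del
      ltac:(nra) Hth Hlam Hq Hal ltac:(lra) (rpow_ge0 _ _) (rpow_ge0 _ _) Hdel).
    assert (Pr : forall s, - (m * b) - del < s < - (m * x) + del -> derivable_pt_lim (fun s => f (- s)) s (- f' (- s))).
    { intros s Hs. apply is_derive_Reals. eapply is_derive_val.
      apply (D_comp f (fun s => - s)). apply is_derive_Reals. apply Hdf. lra.
      apply (D_ext_R (fun s => -1 * s)). intros; ring. apply is_derive_scal. apply D_id. simpl; ring. }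
    specialize (P Pr).
    assert (Pg : forall s, - (m * b) <= s <= - (m * x) -> rpow (Rabs (- f' (- s))) q <=
      rpow ((s - - (m * b)) / (- (m * x) - - (m * b))) alpha * rpow (Rabs (f' (m * x))) q +
      m * (1 - rpow ((s - - (m * b)) / (- (m * x) - - (m * b))) alpha) * rpow (Rabs (f' b)) q).
    { intros s Hs. set (t := (s - - (m * b)) / (- (m * x) - - (m * b))).
      assert (Ht : 0 <= t <= 1).
      { unfold t. split. apply Rdiv_le_0_compat; nra.
        apply (Rmult_le_reg_r (- (m * x) - - (m * b))). nra. unfold Rdiv. rewrite Rmult_assoc, Rinv_l by nra. lra. }
      assert (Hpt : t * (m * x) + m * (1 - t) * b = - s) by (unfold t; field; nra).
      assert (HC := Hconv (m * x) b t ltac:(lra) ltac:(lra) Ht ltac:(rewrite Hpt; lra)).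
      simpl in HC. rewrite Hpt in HC. rewrite Rabs_Ropp. exact HC. }
    specialize (P Pg). fold p RA C2 in P. unfold C2 in P.
    replace (- (m * x) - - (m * b)) with (m * (b - x)) in P by ring.
    rewrite <- Rpower_mult_distr in P by lra.
    rewrite !Ropp_involutive in P.
    assert (HIR : Integral (fun s => rpow (s - - (m * b)) (th - 1) * f (- s)) (- (m * b)) (- (m * x)) = IR).
    { unfold IR. symmetry. apply Integral_refl. apply Rmult_lt_compat_l; lra. intros s. f_equal. f_equal. ring. }
    rewrite HIR in P.
    unfold TR.
    replace (rpow m (th - 1) * rpow (b - x) th / (b - a) * ((1 - lam) * f (m * x) + lam * f (m * b)) - th / (m * (b - a)) * IR)
      with (rpow m (th - 1) * rpow (b - x) th / (b - a) *
        ((1 - lam) * f (m * x) + lam * f (m * b) - th / (Rpower m th * Rpower (b - x) th) * IR)).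
    2: { rewrite !rpow_pos by lra. rewrite (Rpower_m1 m th) by lra.
         assert (0 < Rpower m (th - 1)) by apply Rpower_pos. assert (0 < Rpower (b - x) th) by apply Rpower_pos.
         field. repeat split; lra. }
    rewrite Rabs_mult. rewrite (Rabs_pos_eq (rpow m (th - 1) * rpow (b - x) th / (b - a))).
    2: { unfold Rdiv. repeat apply Rmult_le_pos; try apply rpow_ge0. left; apply Rinv_0_lt_compat; lra. }
    eapply Rle_trans. apply Rmult_le_compat_l. unfold Rdiv. repeat apply Rmult_le_pos; try apply rpow_ge0.
    left; apply Rinv_0_lt_compat; lra. exact P.
    rewrite Hrm. rewrite !(rpow_pos (b - x)) by lra. rewrite (rpow_pos m) by lra.
    rewrite (Rpower_m1 (b - x) (th + 1)) by lra. replace (th + 1 - 1) with th by ring.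
    unfold C2. right. field. lra. }
rewrite Eq. eapply Rle_trans. apply Rabs_triang.
fold C1 C2 RA.
assert (EE : rpow m th * RA / (b - a) * (rpow (x - a) (th + 1) * rpow C1 (/ q) + rpow (b - x) (th + 1) * rpow C2 (/ q))
  = rpow m th * RA / (b - a) * (rpow (x - a) (th + 1) * rpow C1 (/ q)) + rpow m th * RA / (b - a) * (rpow (b - x) (th + 1) * rpow C2 (/ q))) by ring.
rewrite EE. lra.
Qed.
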